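(* Let $p/q\in\mathcal S$. There exists a lattice $\Lambda_{p,q}\in C(p,q)$ such that: (1) $|\Lambda_{p,q}|=\min\{|\Lambda|:\Lambda\in C(p,q)\}=\sqrt q$; (2) $\det(\Lambda_{p,q})=\min\{\det(\Lambda):\Lambda\in C(p,q)\}=p$; (3) the norm form of $\Lambda_{p,q}$ with respect to a minimal basis (a basis consisting of two minimal vectors) is $Q_{p,q}(x,y)=qx^2+2xy\sqrt{q^2-p^2}+qy^2$; (4) for every $\Lambda\in C(p,q)$ there is $U\in O_2(\mathbb R)$ with $\Lambda=\sqrt{\det(\Lambda)/p}\,U\Lambda_{p,q}$, so that $\frac{\det(\Lambda)}{p}Q_{p,q}(x,y)$ is the norm form of $\Lambda$ with respect to a minimal basis; (5) for every $\Lambda\in C(p,q)$ and $\Re(s)>1$, $E_\Lambda(s)=\left(\frac{p}{\det\Lambda}\right)^s\sum'_{(x,y)\in\mathbb Z^2}Q_{p,q}(x,y)^{-s}$, and hence for each real $s>1$, $\Lambda_{p,q}$ maximizes $E_\Lambda(s)$ over $\Lambda\in C(p,q)$. Such a lattice $\Lambda_{p,q}$ is unique up to rotation by an orthogonal matrix with rational entries.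
   Context: All lattices are full-rank lattices in $\mathbb R^2$. For a lattice $\Lambda$, $|\Lambda|=\min_{x\in\Lambda\setminus\{0\}}\|x\|$ (Euclidean norm) and $S(\Lambda)=\{x\in\Lambda:\|x\|=|\Lambda|\}$; $\Lambda$ is well-rounded (WR) if $S(\Lambda)$ spans $\mathbb R^2$. $\mathrm{WR}(\mathbb Z^2)$ is the set of full-rank WR sublattices of $\mathbb Z^2$. For a WR lattice $\Lambda$, $\theta(\Lambda)\in[\pi/3,\pi/2]$ is the angle between two linearly independent minimal vectors chosen so that the angle is at most $\pi/2$; equivalently $\sin\theta(\Lambda)=\det(\Lambda)/|\Lambda|^2$. For $q\in\mathbb Z_{>0}$ let $\mathcal S_q=\{p/q\in\mathbb Q\cap(\sqrt3/2,1):\gcd(p,q)=1,\ \sqrt{q^2-p^2}\in\mathbb Z\}$ and $\mathcal S=\bigcup_{q}\mathcal S_q\cup\{1\}$, where $1$ is written as $p/q$ with $p=q=1$; elements of $\mathcal S$ are written in lowest terms. For $p/q\in\mathcal S$, $C(p,q)=\{\Lambda\in\mathrm{WR}(\mathbb Z^2):\sin\theta(\Lambda)=p/q\}$. The Epstein zeta function of a lattice $\Lambda$ is $E_\Lambda(s)=\sum'_{x\in\Lambda}\|x\|^{-2s}$, where $\sum'$ denotes summation over $(\Lambda\setminus\{0\})/\{\pm1\}$ (similarly $\sum'_{(x,y)\in\mathbb Z^2}$ sums over $(\mathbb Z^2\setminus\{0\})/\{\pm1\}$). *)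

(* Defs.v *)
From Stdlib Require Import Reals Lra Lia ZArith Arith List QArith Qreals ClassicalEpsilon.
Open Scope R_scope.

Definition vec : Type := (R * R)%type.
Definition v0 : vec := (0, 0).
Definition vadd (u v : vec) : vec := (fst u + fst v, snd u + snd v).
Definition vscale (c : R) (v : vec) : vec := (c * fst v, c * snd v).
Definition norm2 (v : vec) : R := fst v ^ 2 + snd v ^ 2.
Definition norm (v : vec) : R := sqrt (norm2 v).
Definition det2 (u v : vec) : R := fst u * snd v - snd u * fst v.

Record mat2 : Type := Mat2 { m11 : R; m12 : R; m21 : R; m22 : R }.
Definition mapply (U : mat2) (v : vec) : vec :=
  (m11 U * fst v + m12 U * snd v, m21 U * fst v + m22 U * snd v).
Definition orthogonal (U : mat2) : Prop :=
  m11 U ^ 2 + m21 U ^ 2 = 1 /\ m12 U ^ 2 + m22 U ^ 2 = 1 /\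
  m11 U * m12 U + m21 U * m22 U = 0.
Definition rational_mat (U : mat2) : Prop :=
  exists a b c d : Q, m11 U = Q2R a /\ m12 U = Q2R b /\ m21 U = Q2R c /\ m22 U = Q2R d.

Definition is_basis (L : vec -> Prop) (b1 b2 : vec) : Prop :=
  det2 b1 b2 <> 0 /\
  forall v, L v <-> exists m n : Z, v = vadd (vscale (IZR m) b1) (vscale (IZR n) b2).
Definition is_lattice (L : vec -> Prop) : Prop := exists b1 b2, is_basis L b1 b2.

(** det(L) = |det(b1,b2)| for a basis (independent of the basis) *)
Definition lat_det (L : vec -> Prop) : R :=
  epsilon (inhabits 0) (fun d => exists b1 b2, is_basis L b1 b2 /\ d = Rabs (det2 b1 b2)).

Definition is_min_norm (L : vec -> Prop) (r : R) : Prop :=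
  (exists v, L v /\ v <> v0 /\ norm v = r) /\
  (forall v, L v -> v <> v0 -> r <= norm v).
Definition lat_min (L : vec -> Prop) : R := epsilon (inhabits 0) (is_min_norm L).

Definition minimal_vec (L : vec -> Prop) (v : vec) : Prop :=
  L v /\ v <> v0 /\ norm v = lat_min L.
Definition minimal_basis (L : vec -> Prop) (b1 b2 : vec) : Prop :=
  is_basis L b1 b2 /\ minimal_vec L b1 /\ minimal_vec L b2.

Definition well_rounded (L : vec -> Prop) : Prop :=
  is_lattice L /\ exists u v, minimal_vec L u /\ minimal_vec L v /\ det2 u v <> 0.
Definition sub_Z2 (L : vec -> Prop) : Prop :=
  forall v, L v -> exists m n : Z, v = (IZR m, IZR n).
Definition WR_Z2 (L : vec -> Prop) : Prop := well_rounded L /\ sub_Z2 L.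

Definition sin_theta (L : vec -> Prop) : R := lat_det L / (lat_min L ^ 2).

Definition C_pq (p q : nat) (L : vec -> Prop) : Prop :=
  WR_Z2 L /\ sin_theta L = INR p / INR q.

Definition in_S (p q : nat) : Prop :=
  (p = 1%nat /\ q = 1%nat) \/
  ((0 < q)%nat /\ Nat.gcd p q = 1%nat /\
   (exists r : nat, (r * r + p * p = q * q)%nat) /\
   sqrt 3 / 2 < INR p / INR q < 1).

Definition Qpq (p q : nat) (x y : R) : R :=
  INR q * x ^ 2 + 2 * x * y * sqrt (INR q ^ 2 - INR p ^ 2) + INR q * y ^ 2.

(** * Complex numbers as pairs (re, im) *)
Definition C : Type := (R * R)%type.
Definition Cadd (z w : C) : C := (fst z + fst w, snd z + snd w).
Definition Csub (z w : C) : C := (fst z - fst w, snd z - snd w).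
Definition Cmul (z w : C) : C :=
  (fst z * fst w - snd z * snd w, fst z * snd w + snd z * fst w).
Definition Copp (z : C) : C := (- fst z, - snd z).
Definition Cnorm (z : C) : R := sqrt (fst z ^ 2 + snd z ^ 2).
(** a^s = exp(s ln a) for real a > 0 and complex s *)
Definition Cpow_pos (a : R) (s : C) : C :=
  (exp (fst s * ln a) * cos (snd s * ln a), exp (fst s * ln a) * sin (snd s * ln a)).
Definition Csum {T : Type} (f : T -> C) (l : list T) : C :=
  fold_right (fun x acc => Cadd (f x) acc) (0, 0) l.

(** Unordered (net) summation: the family f indexed by {x | A x} is summable
    with sum S (limit over finite subsets). *)
Definition has_usum {T : Type} (A : T -> Prop) (f : T -> C) (S : C) : Prop :=
  forall eps, 0 < eps ->
  exists F0 : list T, (forall x, In x F0 -> A x) /\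
    forall F : list T, NoDup F -> (forall x, In x F -> A x) ->
      (forall x, In x F0 -> In x F) -> Cnorm (Csub (Csum f F) S) < eps.

(** E_L(s) = E : sum over (L \ 0)/{±1} of |x|^(-2s), i.e. half the sum over L \ 0. *)
Definition epstein_sum (L : vec -> Prop) (s E : C) : Prop :=
  has_usum (fun v => L v /\ v <> v0) (fun v => Cpow_pos (norm2 v) (Copp s)) (Cmul (2, 0) E).

(** F = sum' over (Z^2 \ 0)/{±1} of Q_{p,q}(x,y)^(-s) *)
Definition Q_sum (p q : nat) (s F : C) : Prop :=
  has_usum (fun z : Z * Z => z <> (0%Z, 0%Z))
    (fun z => Cpow_pos (Qpq p q (IZR (fst z)) (IZR (snd z))) (Copp s)) (Cmul (2, 0) F).

Definition thm_props (p q : nat) (L0 : vec -> Prop) : Prop :=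
  C_pq p q L0 /\
  (lat_min L0 = sqrt (INR q) /\ forall L, C_pq p q L -> sqrt (INR q) <= lat_min L) /\
  (lat_det L0 = INR p /\ forall L, C_pq p q L -> INR p <= lat_det L) /\
  (exists b1 b2, minimal_basis L0 b1 b2 /\
     forall x y : R, norm2 (vadd (vscale x b1) (vscale y b2)) = Qpq p q x y) /\
  (forall L, C_pq p q L ->
     (exists U, orthogonal U /\
        forall v, L v <-> exists w, L0 w /\
          v = vscale (sqrt (lat_det L / INR p)) (mapply U w)) /\
     (exists b1 b2, minimal_basis L b1 b2 /\
        forall x y : R, norm2 (vadd (vscale x b1) (vscale y b2))
                        = lat_det L / INR p * Qpq p q x y)) /\
  (forall L, C_pq p q L -> forall s : C, 1 < fst s ->
     exists E F, epstein_sum L s E /\ Q_sum p q s F /\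
       E = Cmul (Cpow_pos (INR p / lat_det L) s) F) /\
  (forall s : R, 1 < s -> forall L, C_pq p q L -> forall E E0,
     epstein_sum L (s, 0) E -> epstein_sum L0 (s, 0) E0 -> fst E <= fst E0).

(* Main.v *)
Require Import Defs.
From Stdlib Require Import Reals QArith Qreals.
From Stdlib Require Import Lra Lia ZArith Arith List Znumtheory Wf_nat ClassicalEpsilon Classical Permutation.
Open Scope R_scope.

Open Scope R_scope.

Open Scope Z_scope.

Lemma rel_prime_sq (x y : Z) : Z.gcd x y = 1 -> Z.gcd (x*x) (y*y) = 1.
Proof.
  intro H. apply Zgcd_1_rel_prime in H. apply Zgcd_1_rel_prime.
  apply rel_prime_sym. apply rel_prime_mult; apply rel_prime_sym; apply rel_prime_mult; auto.
Qed.

Lemma gcd_sq (x y : Z) : Z.gcd (x*x) (y*y) = Z.gcd x y * Z.gcd x y.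
Proof.
  destruct (Z.eq_dec (Z.gcd x y) 0) as [H0|H0].
  - apply Z.gcd_eq_0 in H0. destruct H0; subst. reflexivity.
  - set (g := Z.gcd x y) in *.
    destruct (Z.gcd_divide_l x y) as [x' Hx]. destruct (Z.gcd_divide_r x y) as [y' Hy].
    fold g in Hx, Hy.
    assert (Hg : Z.gcd x' y' = 1).
    { pose proof (Z.gcd_div_gcd x y g H0 eq_refl) as Hd.
      rewrite Hx, Hy in Hd. rewrite !Z.div_mul in Hd by exact H0. exact Hd. }
    rewrite Hx, Hy.
    replace (x' * g * (x' * g)) with ((g*g) * (x'*x')) by ring.
    replace (y' * g * (y' * g)) with ((g*g) * (y'*y')) by ring.
    rewrite Z.gcd_mul_mono_l, rel_prime_sq by exact Hg.
    rewrite Z.abs_eq by nia. ring.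
Qed.

Lemma pyth_param (o e q : Z) : 0 <= o -> 0 <= e -> 0 < q -> Z.Even e ->
  o*o + e*e = q*q -> Z.gcd o q = 1 ->
  exists M N, M*M + N*N = q /\ M*M - N*N = o /\ 2*M*N = e /\ 0 <= M /\ 0 <= N.
Proof.
  intros Ho He Hq [c Hc] Hpy Hg.
  assert (Hoq : o <= q) by nia.
  assert (HA : exists a b, q + o = 2*a /\ q - o = 2 * b).
  { destruct (Z.Even_or_Odd o) as [[a Ha]|[a Ha]]; destruct (Z.Even_or_Odd q) as [[b Hb]|[b Hb]];
      subst.
    - exists (b + a), (b - a). lia.
    - exfalso. assert (2*(2*a*a + 2*c*c - 2*b*b - 2*b) = 1) by lia. lia.
    - exfalso. assert (2*(2*a*a + 2*a + 2*c*c - 2*b*b) = -1) by lia. lia.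
    - exists (b + a + 1), (b - a). lia. }
  destruct HA as [a [b [HA HB]]].
  set (A := q + o) in *. set (B := q - o) in *.
  assert (HAB : A * B = e * e) by (unfold A, B; nia).
  assert (HG : Z.gcd A B = 2).
  { apply Z.divide_antisym_nonneg. apply Z.gcd_nonneg. lia.
    - assert (H1 : (Z.gcd A B | 2 * q)).
      { replace (2*q) with (A + B) by (unfold A, B; ring).
        apply Z.divide_add_r; [apply Z.gcd_divide_l|apply Z.gcd_divide_r]. }
      assert (H2 : (Z.gcd A B | 2 * o)).
      { replace (2*o) with (A - B) by (unfold A, B; ring).
        apply Z.divide_sub_r; [apply Z.gcd_divide_l|apply Z.gcd_divide_r]. }
      pose proof (Z.gcd_greatest _ _ _ H1 H2) as H3.
      rewrite Z.gcd_mul_mono_l in H3. rewrite (Z.gcd_comm q o), Hg in H3. simpl in H3. exact H3.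
    - apply Z.gcd_greatest; [rewrite HA|rewrite HB]; apply Z.divide_factor_l. }
  assert (HM : exists M, A = 2 * (M*M) /\ 0 <= M).
  { set (g := Z.gcd A e).
    assert (Hgg : g * g = 2 * A).
    { unfold g. rewrite <- gcd_sq. rewrite <- HAB.
      rewrite Z.gcd_mul_mono_l, HG. rewrite Z.abs_eq by lia. ring. }
    assert (H2 : (2 | g)).
    { apply Z.gcd_greatest; [rewrite HA|rewrite Hc]; apply Z.divide_factor_l. }
    destruct H2 as [M HM]. exists M. split. nia.
    pose proof (Z.gcd_nonneg A e). fold g in H. lia. }
  assert (HN : exists N, B = 2 * (N*N) /\ 0 <= N).
  { set (g := Z.gcd B e).
    assert (Hgg : g * g = 2 * B).
    { unfold g. rewrite <- gcd_sq. rewrite <- HAB.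
      rewrite (Z.mul_comm A B), Z.gcd_mul_mono_l, Z.gcd_comm, HG. rewrite Z.abs_eq by lia. ring. }
    assert (H2 : (2 | g)).
    { apply Z.gcd_greatest; [rewrite HB|rewrite Hc]; apply Z.divide_factor_l. }
    destruct H2 as [N HN]. exists N. split. nia.
    pose proof (Z.gcd_nonneg B e). fold g in H. lia. }
  destruct HM as [M [HM HM0]]. destruct HN as [N [HN HN0]].
  exists M, N. unfold A, B in *.
  split. lia. split. lia. split; [|lia].
  assert (E2 : e * e = (2*M*N) * (2*M*N)) by nia.
  assert (0 <= 2*M*N) by nia. nia.
Qed.

Lemma nat_gcd_Z (p q : nat) : (0 < p)%nat -> Nat.gcd p q = 1%nat ->
  Z.gcd (Z.of_nat p) (Z.of_nat q) = 1.
Proof.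
  intros Hp Hg. destruct (Nat.gcd_bezout_pos p q Hp) as [a [b Hab]].
  rewrite Hg in Hab.
  apply Z.divide_1_r_nonneg. apply Z.gcd_nonneg.
  assert (E : 1 = Z.of_nat a * Z.of_nat p - Z.of_nat b * Z.of_nat q).
  { apply (f_equal Z.of_nat) in Hab. rewrite Nat2Z.inj_mul, Nat2Z.inj_add, Nat2Z.inj_mul in Hab. lia. }
  rewrite E. apply Z.divide_sub_r; apply Z.divide_mul_r; [apply Z.gcd_divide_l|apply Z.gcd_divide_r].
Qed.

Lemma int_vectors (P Q R : Z) : 0 < P -> 0 < Q -> 0 <= R -> R*R + P*P = Q*Q -> Z.gcd P Q = 1 ->
  exists a1 a2 c1 c2 : Z, a1*a1 + a2*a2 = Q /\ c1*c1 + c2*c2 = Q /\ a1*c1 + a2*c2 = R.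
Proof.
  intros HP HQ HR Hpy Hg.
  assert (HgR : Z.gcd R Q = 1).
  { apply Z.divide_1_r_nonneg. apply Z.gcd_nonneg.
    rewrite <- (rel_prime_sq Q P) by (rewrite Z.gcd_comm; exact Hg).
    apply Z.gcd_greatest.
    - apply Z.divide_mul_l. apply Z.gcd_divide_r.
    - replace (P*P) with (Q*Q - R*R) by lia.
      apply Z.divide_sub_r; apply Z.divide_mul_l; [apply Z.gcd_divide_r|apply Z.gcd_divide_l]. }
  destruct (Z.Even_or_Odd P) as [HPe|HPo].
  - destruct (pyth_param R P Q HR ltac:(lia) HQ HPe Hpy HgR) as [M [N [H1 [H2 [H3 _]]]]].
    exists M, (-N), M, N. repeat split; lia.
  - assert (HRe : Z.Even R).
    { destruct (Z.Even_or_Odd R) as [H|[b Hb]]; auto. exfalso. destruct HPo as [a Ha].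
      destruct (Z.Even_or_Odd Q) as [[c Hc]|[c Hc]]; subst.
      - assert (2*(2*b*b+2*b+2*a*a+2*a - 2*c*c) = -2 + 0) by nia.
        assert (4*(b*b+b+a*a+a - c*c) = -2) by nia. lia.
      - assert (4*(b*b+b+a*a+a - c*c - c) = -1) by nia. lia. }
    destruct (pyth_param P R Q ltac:(lia) HR HQ HRe ltac:(lia) Hg) as [M [N [H1 [H2 [H3 _]]]]].
    exists M, (-N), N, (-M). repeat split; lia.
Qed.
Close Scope Z_scope.

Open Scope R_scope.

Definition dot (u v : vec) : R := fst u * fst v + snd u * snd v.

Lemma Rabs_le_inv' x a : Rabs x <= a -> -a <= x <= a.
Proof. unfold Rabs; destruct (Rcase_abs x); lra. Qed.

Lemma vec_eq (a b : vec) : fst a = fst b -> snd a = snd b -> a = b.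
Proof. destruct a, b; simpl; intros; subst; reflexivity. Qed.

Lemma basis_closed L b1 b2 a c : is_basis L b1 b2 -> L a -> L c -> forall m n : Z,
  L (vadd (vscale (IZR m) a) (vscale (IZR n) c)).
Proof.
  intros [_ HL] Ha Hc m n.
  apply HL in Ha as [m1 [n1 Ha]]. apply HL in Hc as [m2 [n2 Hc]]. apply HL.
  exists (m*m1 + n*m2)%Z, (m*n1 + n*n2)%Z. subst.
  unfold vadd, vscale; simpl. rewrite !plus_IZR, !mult_IZR. f_equal; ring.
Qed.

Lemma basis_closed1 L b1 b2 a c : is_basis L b1 b2 -> L a -> L c -> forall x y : Z,
  L (fst a * IZR x + fst c * IZR y, snd a * IZR x + snd c * IZR y).
Proof.
  intros H Ha Hc x y. pose proof (basis_closed L b1 b2 a c H Ha Hc x y) as K.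
  replace (fst a * IZR x + fst c * IZR y, snd a * IZR x + snd c * IZR y)
    with (vadd (vscale (IZR x) a) (vscale (IZR y) c)); auto.
  unfold vadd, vscale; simpl; f_equal; ring.
Qed.

Lemma det_comb a b c d b1 b2 :
  det2 (vadd (vscale a b1) (vscale b b2)) (vadd (vscale c b1) (vscale d b2)) = (a*d - b*c) * det2 b1 b2.
Proof. unfold det2, vadd, vscale; simpl; ring. Qed.

Lemma basis_det_eq L b1 b2 c1 c2 : is_basis L b1 b2 -> is_basis L c1 c2 ->
  Rabs (det2 b1 b2) = Rabs (det2 c1 c2).
Proof.
  intros Hb Hc. pose proof Hb as [Db HB]. pose proof Hc as [Dc HC].
  assert (Lc1 : L c1). { apply HC. exists 1%Z, 0%Z. apply vec_eq; unfold vadd, vscale; simpl; ring. }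
  assert (Lc2 : L c2). { apply HC. exists 0%Z, 1%Z. apply vec_eq; unfold vadd, vscale; simpl; ring. }
  assert (Lb1 : L b1). { apply HB. exists 1%Z, 0%Z. apply vec_eq; unfold vadd, vscale; simpl; ring. }
  assert (Lb2 : L b2). { apply HB. exists 0%Z, 1%Z. apply vec_eq; unfold vadd, vscale; simpl; ring. }
  apply HB in Lc1 as [a [b E1]]. apply HB in Lc2 as [c [d E2]].
  apply HC in Lb1 as [a' [b' F1]]. apply HC in Lb2 as [c' [d' F2]].
  assert (K1 : det2 c1 c2 = IZR (a*d - b*c) * det2 b1 b2).
  { rewrite E1, E2, det_comb, minus_IZR, !mult_IZR. reflexivity. }
  assert (K2 : det2 b1 b2 = IZR (a'*d' - b'*c') * det2 c1 c2).
  { rewrite F1, F2, det_comb, minus_IZR, !mult_IZR. reflexivity. }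
  remember (a*d - b*c)%Z as k. remember (a'*d' - b'*c')%Z as k'.
  rewrite K1 in K2.
  assert (K3 : (IZR k' * IZR k - 1) * det2 b1 b2 = 0) by lra.
  apply Rmult_integral in K3 as [K3|K3]; [|contradiction].
  assert (K4 : (k * k' = 1)%Z). { apply eq_IZR. rewrite mult_IZR. simpl. lra. }
  apply Z.eq_mul_1 in K4.
  assert (Hk : Rabs (IZR k) = 1) by (destruct K4 as [K4|K4]; rewrite K4; rewrite ?opp_IZR; unfold Rabs; destruct (Rcase_abs _); lra). rewrite K1, Rabs_mult, Hk; ring.

Qed.

Lemma lat_det_basis L b1 b2 : is_basis L b1 b2 -> lat_det L = Rabs (det2 b1 b2).
Proof.
  intro Hb. unfold lat_det.
  destruct (epsilon_spec (inhabits 0)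
    (fun d => exists b1 b2, is_basis L b1 b2 /\ d = Rabs (det2 b1 b2))) as [c1 [c2 [Hc E]]].
  { exists (Rabs (det2 b1 b2)), b1, b2. auto. }
  rewrite E. symmetry. apply (basis_det_eq L); auto.
Qed.

Lemma min_unique L r1 r2 : is_min_norm L r1 -> is_min_norm L r2 -> r1 = r2.
Proof.
  intros [[v1 [H1 [N1 E1]]] A1] [[v2 [H2 [N2 E2]]] A2].
  specialize (A1 v2 H2 N2). specialize (A2 v1 H1 N1). lra.
Qed.

Lemma lat_min_spec L : (exists r, is_min_norm L r) -> is_min_norm L (lat_min L).
Proof. intro H. unfold lat_min. apply epsilon_spec. exact H. Qed.

Lemma lat_min_eq L r : is_min_norm L r -> lat_min L = r.
Proof. intro H. apply (min_unique L); auto. apply lat_min_spec. eauto. Qed.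

Lemma norm2_nonneg v : 0 <= norm2 v.
Proof. unfold norm2. nra. Qed.

Lemma norm2_Z (a b : Z) : norm2 (IZR a, IZR b) = IZR (a*a + b*b).
Proof. unfold norm2; simpl. rewrite plus_IZR, !mult_IZR. ring. Qed.

Lemma ineq a b N d : -1/2 <= a <= 1/2 -> -1/2 <= b <= 1/2 -> 0 < N -> d*d < N*N -> a*a*N + b*b*N + 2*a*b*d < N.
Proof.
  intros Ha Hb HN Hd.
  assert (Hd' : -N < d < N) by nra.
  assert (H1 : a*a <= 1/4) by nra. assert (H2 : b*b <= 1/4) by nra.
  destruct (Rle_lt_dec 0 (a*b)) as [Hab|Hab].
  - assert (a*b <= 1/4) by nra.
    destruct (Rle_lt_dec (a*b) 0) as [H0|H0].
    + assert (Hz : a*b = 0) by lra. replace (2*a*b*d) with (2*(a*b)*d) by ring. rewrite Hz. nra.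
    + assert (2*a*b*d < 2*a*b*N) by nra. nra.
  - assert (-(a*b) <= 1/4) by nra.
    assert (2*a*b*d < -2*a*b*N) by nra. nra.
Qed.

Lemma min_exists_Z2 L : sub_Z2 L -> (exists v, L v /\ v <> v0) -> exists r, is_min_norm L r.
Proof.
  intros HZ [v [Hv Hv0]].
  set (P := fun k : nat => exists w, L w /\ w <> v0 /\ norm2 w = INR k).
  assert (HP : forall w, L w -> exists k, norm2 w = INR k).
  { intros w Lw. destruct (HZ w Lw) as [m [n ->]]. exists (Z.to_nat (m*m+n*n)).
    rewrite norm2_Z, INR_IZR_INZ, Z2Nat.id by nia. reflexivity. }
  destruct (dec_inh_nat_subset_has_unique_least_element P (fun n => classic (P n))) as [k0 [[Pk0 Hk0] _]].
  { destruct (HP v Hv) as [k Hk]. exists k, v. auto. }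
  destruct Pk0 as [w0 [Lw0 [Nw0 Ew0]]].
  exists (sqrt (INR k0)). split.
  - exists w0. unfold norm. rewrite Ew0. auto.
  - intros w Lw Nw. destruct (HP w Lw) as [k Ek]. unfold norm. rewrite Ek.
    apply sqrt_le_1_alt. apply le_INR. apply Hk0. exists w; auto.
Qed.

Lemma basis_in1 L b1 b2 : is_basis L b1 b2 -> L b1.
Proof. intros [_ H]. apply H. exists 1%Z, 0%Z. apply vec_eq; unfold vadd, vscale; simpl; ring. Qed.
Lemma basis_in2 L b1 b2 : is_basis L b1 b2 -> L b2.
Proof. intros [_ H]. apply H. exists 0%Z, 1%Z. apply vec_eq; unfold vadd, vscale; simpl; ring. Qed.

Lemma det_nz_l u v : det2 u v <> 0 -> u <> v0.
Proof. intros H E. subst. apply H. unfold det2, v0; simpl. ring. Qed.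
Lemma det_nz_r u v : det2 u v <> 0 -> v <> v0.
Proof. intros H E. subst. apply H. unfold det2, v0; simpl. ring. Qed.

Lemma norm2_comb x y b1 b2 : norm2 (vadd (vscale x b1) (vscale y b2)) =
  x*x*norm2 b1 + y*y*norm2 b2 + 2*x*y*dot b1 b2.
Proof. unfold norm2, dot, vadd, vscale; simpl; ring. Qed.

Lemma int_ineq (m n : Z) : (m <> 0 \/ n <> 0)%Z -> (1 <= m*m + n*n - Z.abs (m*n))%Z.
Proof. intros H. destruct (Z.abs_spec (m*n)) as [[_ E]|[_ E]]; rewrite E; nia. Qed.

Lemma reduced_min L b1 b2 N : is_basis L b1 b2 -> norm2 b1 = N -> norm2 b2 = N ->
  2 * Rabs (dot b1 b2) <= N -> is_min_norm L (sqrt N).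
Proof.
  intros Hb E1 E2 Hd. split.
  - exists b1. split. eapply basis_in1; eauto. split. destruct Hb; eapply det_nz_l; eauto.
    unfold norm; rewrite E1; auto.
  - intros v Lv Nv. pose proof Hb as [_ HB]. apply HB in Lv as [m [n E]]. subst v.
    unfold norm. apply sqrt_le_1_alt. rewrite norm2_comb, E1, E2.
    assert (Hmn : (m <> 0 \/ n <> 0)%Z).
    { destruct (Z.eq_dec m 0); destruct (Z.eq_dec n 0); auto. subst. exfalso. apply Nv.
      apply vec_eq; unfold vadd, vscale, v0; simpl; ring. }
    apply int_ineq in Hmn. apply IZR_le in Hmn.
    rewrite minus_IZR, plus_IZR, !mult_IZR, abs_IZR, mult_IZR, Rabs_mult in Hmn.
    assert (HN : 0 <= N) by (rewrite <- E1; apply norm2_nonneg).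
    assert (K : - (Rabs (IZR m) * Rabs (IZR n)) * N <= 2 * IZR m * IZR n * dot b1 b2).
    { assert (K1 : Rabs (2 * IZR m * IZR n * dot b1 b2) <= Rabs (IZR m) * Rabs (IZR n) * N).
      { rewrite !Rabs_mult. rewrite (Rabs_right 2) by lra.
        replace (2 * Rabs (IZR m) * Rabs (IZR n) * Rabs (dot b1 b2)) with
          (Rabs (IZR m) * Rabs (IZR n) * (2 * Rabs (dot b1 b2))) by ring.
        apply Rmult_le_compat_l; auto. apply Rmult_le_pos; apply Rabs_pos. }
      apply Rabs_le_inv' in K1. lra. }
    nra.
Qed.

Lemma round_Z x : exists k : Z, -1/2 <= x - IZR k < 1/2.
Proof.
  destruct (archimed (x - 1/2)) as [H1 H2]. exists (up (x - 1/2)). lra.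
Qed.

Lemma min_basis L r u v : is_lattice L -> is_min_norm L r -> L u -> L v ->
  norm u = r -> norm v = r -> det2 u v <> 0 -> is_basis L u v.
Proof.
  intros [c1 [c2 Hc]] [_ Hmin] Lu Lv Nu Nv D. split; auto.
  intro w. split.
  - intro Lw.
    set (N := norm2 u).
    assert (NvN : norm2 v = N).
    { apply sqrt_inj; try apply norm2_nonneg. unfold N. change (norm v = norm u). congruence. }
    set (dd := det2 u v).
    set (al := det2 w v / dd). set (be := det2 u w / dd).
    destruct (round_Z al) as [k1 Hk1]. destruct (round_Z be) as [k2 Hk2].
    set (w' := (fst w - IZR k1 * fst u - IZR k2 * fst v, snd w - IZR k1 * snd u - IZR k2 * snd v)).
    assert (Lw' : L w').
    { assert (L1 : L (fst u * IZR (-k1) + fst v * IZR (-k2), snd u * IZR (-k1) + snd v * IZR (-k2)))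
        by (eapply basis_closed1; eauto).
      pose proof (basis_closed1 L c1 c2 _ _ Hc Lw L1 1 1) as L2.
      replace w' with (fst w * IZR 1 + (fst u * IZR (- k1) + fst v * IZR (- k2)) * IZR 1,
       snd w * IZR 1 + (snd u * IZR (- k1) + snd v * IZR (- k2)) * IZR 1); auto.
      unfold w'. rewrite !opp_IZR. apply vec_eq; simpl; ring. }
    assert (Ew' : w' = vadd (vscale (al - IZR k1) u) (vscale (be - IZR k2) v)).
    { unfold w', al, be, dd, det2. apply vec_eq; unfold vadd, vscale; simpl; field; exact D. }
    assert (HN : 0 < N).
    { pose proof (norm2_nonneg u). destruct (Req_dec N 0) as [E|E]; [|unfold N in *; lra].
      exfalso. apply D. unfold N, norm2 in E. assert (fst u = 0) by nra. assert (snd u = 0) by nra.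
      unfold dd, det2. rewrite H0, H1. ring. }
    assert (Hlt : norm2 w' < N).
    { rewrite Ew', norm2_comb, NvN. apply ineq; try lra.
      assert (dot u v * dot u v + dd * dd = N * N).
      { transitivity (norm2 u * norm2 v). unfold dot, dd, det2, norm2; ring. rewrite NvN; reflexivity. }
      assert (0 < dd * dd). { apply Rsqr_pos_lt. exact D. }
      nra. }
    assert (W0 : w' = v0).
    { apply NNPP. intro Hne. specialize (Hmin w' Lw' Hne).
      rewrite <- Nu in Hmin. unfold norm in Hmin. apply sqrt_le_0 in Hmin; try apply norm2_nonneg.
      fold N in Hmin. lra. }
    exists k1, k2. unfold w', v0 in W0. injection W0. intros. apply vec_eq; unfold vadd, vscale; simpl; lra.
  - intros [m [n ->]]. apply (basis_closed1 L c1 c2 u v Hc Lu Lv m n) ||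
      (replace (vadd (vscale (IZR m) u) (vscale (IZR n) v)) with
         (fst u * IZR m + fst v * IZR n, snd u * IZR m + snd v * IZR n);
       [eapply basis_closed1; eauto | apply vec_eq; unfold vadd, vscale; simpl; ring]).
Qed.

Open Scope R_scope.

Definition Sdata (p q r : nat) : Prop :=
  (r*r + p*p = q*q)%nat /\ Nat.gcd p q = 1%nat /\ (0<q)%nat /\ (0<p)%nat /\ (2*r <= q)%nat.

Lemma in_S_data p q : in_S p q -> exists r, Sdata p q r.
Proof.
  intros [[-> ->]|[Hq [Hg [[r Hr] [H1 H2]]]]].
  - exists 0%nat. repeat split; auto.
  - exists r. assert (Hq' : 0 < INR q) by (apply lt_0_INR; auto).
    assert (Hp : 0 < INR p).
    { assert (0 < sqrt 3 / 2). { assert (0 < sqrt 3) by (apply sqrt_lt_R0; lra). lra. }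
      assert (0 < INR p / INR q) by lra.
      assert (INR p = INR p / INR q * INR q) by (field; lra). nra. }
    assert (Hp' : (0 < p)%nat) by (apply INR_lt; simpl; lra).
    assert (H4 : 3 * INR q * INR q < 4 * INR p * INR p).
    { assert (E3 : sqrt 3 * sqrt 3 = 3) by (apply sqrt_sqrt; lra).
      assert (sqrt 3 / 2 * INR q < INR p).
      { assert (INR p = INR p / INR q * INR q) by (field; lra). nra. }
      assert (0 < sqrt 3) by (apply sqrt_lt_R0; lra).
      assert (Ha : 0 <= sqrt 3 / 2 * INR q) by nra.
      assert (Hsq : (sqrt 3 / 2 * INR q) * (sqrt 3 / 2 * INR q) < INR p * INR p) by nra.
      replace ((sqrt 3 / 2 * INR q) * (sqrt 3 / 2 * INR q)) with (3/4 * INR q * INR q) in Hsq.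
      lra. replace (3/4 * INR q * INR q) with ((sqrt 3 * sqrt 3)/4 * INR q * INR q) by (rewrite E3; ring). field. }
    assert (H5 : (3 * q * q < 4 * p * p)%nat).
    { apply INR_lt. rewrite !mult_INR. simpl INR. lra. }
    repeat split; auto. nia.
Qed.

Lemma sqrt_qp p q r : Sdata p q r -> sqrt (INR q ^ 2 - INR p ^ 2) = INR r.
Proof.
  intros [H _]. replace (INR q ^ 2 - INR p ^ 2) with (INR r ^ 2).
  apply sqrt_pow2. apply pos_INR.
  apply (f_equal INR) in H. rewrite !plus_INR, !mult_INR in H. simpl. nra.
Qed.

Definition Lspan (b1 b2 : vec) : vec -> Prop :=
  fun v => exists m n : Z, v = vadd (vscale (IZR m) b1) (vscale (IZR n) b2).

Definition intvec (v : vec) : Prop := exists m n : Z, v = (IZR m, IZR n).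

Lemma L0_vectors p q r : Sdata p q r -> exists b1 b2 : vec, intvec b1 /\ intvec b2 /\
  norm2 b1 = INR q /\ norm2 b2 = INR q /\ dot b1 b2 = INR r /\ Rabs (det2 b1 b2) = INR p.
Proof.
  intros [H1 [H2 [H3 [H4 H5]]]].
  destruct (int_vectors (Z.of_nat p) (Z.of_nat q) (Z.of_nat r)) as [a1 [a2 [c1 [c2 [E1 [E2 E3]]]]]]; try lia.
  apply nat_gcd_Z; auto.
  exists (IZR a1, IZR a2), (IZR c1, IZR c2). split. eexists _, _; eauto. split. eexists _, _; eauto.
  rewrite !norm2_Z, E1, E2, <- !INR_IZR_INZ. split; auto. split; auto. split.
  - unfold dot; simpl. rewrite <- !mult_IZR, <- plus_IZR, E3, <- INR_IZR_INZ. auto.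
  - unfold det2; simpl. rewrite <- !mult_IZR, <- minus_IZR.
    assert (E4 : ((a1*c2 - a2*c1) * (a1*c2 - a2*c1) = Z.of_nat p * Z.of_nat p)%Z) by nia.
    rewrite <- abs_IZR, INR_IZR_INZ. f_equal.
    assert (0 <= Z.abs (a1*c2 - a2*c1))%Z by lia.
    destruct (Z.abs_spec (a1*c2 - a2*c1)) as [[_ E]|[_ E]]; rewrite E in *; nia.
Qed.

Open Scope R_scope.

Lemma intvec_neg v : intvec v -> intvec (vscale (-1) v).
Proof. intros [m [n ->]]. exists (-m)%Z, (-n)%Z. unfold vscale; simpl. rewrite !opp_IZR. f_equal; ring. Qed.

Lemma lattice_neg L v : is_lattice L -> L v -> L (vscale (-1) v).
Proof.
  intros [c1 [c2 Hc]] Lv. pose proof (basis_closed L c1 c2 v v Hc Lv Lv (-1) 0) as K.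
  replace (vscale (-1) v) with (vadd (vscale (IZR (-1)) v) (vscale (IZR 0) v)); auto.
  apply vec_eq; unfold vadd, vscale; simpl; ring.
Qed.

Lemma norm_neg v : norm (vscale (-1) v) = norm v.
Proof. unfold norm, norm2, vscale; simpl. f_equal. ring. Qed.

Lemma gen_struct p q r L : Sdata p q r -> C_pq p q L -> exists u v t,
  1 <= t /\ is_basis L u v /\ minimal_vec L u /\ minimal_vec L v /\
  norm2 u = INR q * t /\ norm2 v = INR q * t /\ dot u v = INR r * t /\
  lat_det L = INR p * t /\ lat_min L = sqrt (INR q * t) /\ intvec u /\ intvec v /\
  (exists tz : Z, t = IZR tz).
Proof.
  intros HS [[[HL [u [v0' [Mu [Mv Duv]]]]] HZ] Hsin].
  pose proof HS as [Hpy [Hg [Hq [Hp Hr]]]].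
  assert (Hmin : is_min_norm L (lat_min L)).
  { apply lat_min_spec. apply min_exists_Z2; auto. exists u. destruct Mu as [? [? ?]]; auto. }
  assert (Hw : exists w, minimal_vec L w /\ det2 u w <> 0 /\ 0 <= dot u w /\ intvec w).
  { destruct (Rle_lt_dec 0 (dot u v0')).
    - exists v0'. split; [auto|split; [auto|split; [lra|]]]. destruct Mv as [Lv _]. apply HZ in Lv; auto.
    - exists (vscale (-1) v0'). destruct Mv as [Lv [Nv Ev]]. split; [split; [|split]|split; [|split]].
      + apply lattice_neg; auto.
      + intro E. apply Nv. apply vec_eq; unfold vscale, v0 in *; injection E; simpl; intros; lra.
      + rewrite norm_neg; auto.
      + unfold det2, vscale in *; simpl. intro E; apply Duv. lra.
      + unfold dot, vscale in *; simpl in *. lra.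
      + apply intvec_neg. apply HZ in Lv; auto. }
  clear v0' Mv Duv. destruct Hw as [v [Mv [Duv [Dpos Iv]]]].
  assert (Iu : intvec u) by (destruct Mu as [Lu _]; apply HZ; auto).
  assert (Hb : is_basis L u v).
  { destruct Mu as [Lu [_ Nu]]. destruct Mv as [Lv [_ Nv]]. eapply min_basis; eauto. }
  assert (NvN : norm2 v = norm2 u).
  { apply sqrt_inj; try apply norm2_nonneg. destruct Mu as [_ [_ Nu]]. destruct Mv as [_ [_ Nv]].
    unfold norm in *. congruence. }
  assert (Hlm : lat_min L = sqrt (norm2 u)) by (destruct Mu as [_ [_ Nu]]; auto).
  assert (Hld : lat_det L = Rabs (det2 u v)) by (apply lat_det_basis; auto).
  destruct Iu as [u1 [u2 Eu]]. destruct Iv as [v1 [v2 Ev]].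
  set (Nz := (u1*u1 + u2*u2)%Z). set (kz := (u1*v2 - u2*v1)%Z).
  assert (EN : norm2 u = IZR Nz) by (rewrite Eu; apply norm2_Z).
  assert (Ek : det2 u v = IZR kz).
  { rewrite Eu, Ev; unfold det2, kz; simpl. rewrite minus_IZR, !mult_IZR. ring. }
  assert (HNpos : (0 < Nz)%Z).
  { apply lt_IZR. rewrite <- EN. destruct (Req_dec (norm2 u) 0) as [E|E].
    - exfalso. apply Duv. rewrite Eu in E |- *. unfold norm2, det2 in *; simpl in *.
      assert (IZR u1 = 0) by nra. assert (IZR u2 = 0) by nra. rewrite H, H0. ring.
    - pose proof (norm2_nonneg u). lra. }
  assert (Hlm2 : lat_min L ^ 2 = IZR Nz).
  { rewrite Hlm, <- EN. simpl. rewrite Rmult_1_r. apply sqrt_sqrt. apply norm2_nonneg. }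
  assert (Hq' : 0 < INR q) by (apply lt_0_INR; auto).
  assert (HN' : 0 < IZR Nz) by (apply IZR_lt; auto).
  assert (E1 : Rabs (IZR kz) * INR q = INR p * IZR Nz).
  { unfold sin_theta in Hsin. rewrite Hlm2, Hld, Ek in Hsin.
    assert (Rabs (IZR kz) = INR p / INR q * IZR Nz) by (rewrite <- Hsin; field; lra).
    rewrite H. field. lra. }
  rewrite <- abs_IZR, !INR_IZR_INZ, <- !mult_IZR in E1. apply eq_IZR in E1.
  assert (Hdiv : (Z.of_nat q | Z.of_nat p * Nz)%Z).
  { rewrite <- E1. apply Z.divide_mul_r. apply Z.divide_refl. }
  apply Z.gauss in Hdiv; [|rewrite Z.gcd_comm; apply nat_gcd_Z; auto].
  destruct Hdiv as [tz Htz].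
  assert (Htz1 : (1 <= tz)%Z) by nia.
  assert (Hk : Z.abs kz = (Z.of_nat p * tz)%Z).
  { rewrite Htz in E1. apply (Z.mul_reg_r _ _ (Z.of_nat q)); [lia|]. lia. }
  exists u, v, (IZR tz).
  assert (Et : norm2 u = INR q * IZR tz).
  { rewrite EN, Htz, mult_IZR, INR_IZR_INZ. ring. }
  assert (Hpt : (INR r * INR r + INR p * INR p = INR q * INR q)).
  { rewrite <- !mult_INR, <- plus_INR. f_equal. auto. }
  split. apply IZR_le in Htz1. auto.
  split. auto. split. auto. split. auto.
  split. auto. split. congruence.
  split.
  { assert (L1 : dot u v * dot u v + det2 u v * det2 u v = norm2 u * norm2 v).
    { unfold dot, det2, norm2; ring. }
    assert (L2 : det2 u v * det2 u v = INR p * IZR tz * (INR p * IZR tz)).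
    { rewrite Ek. rewrite <- (Rabs_mult (IZR kz)) at 1 || idtac.
      transitivity (Rabs (IZR kz) * Rabs (IZR kz)).
      unfold Rabs; destruct (Rcase_abs _); ring.
      rewrite <- abs_IZR, Hk, mult_IZR, INR_IZR_INZ. ring. }
    rewrite L2, NvN, Et in L1.
    assert (L3 : dot u v * dot u v = (INR r * IZR tz) * (INR r * IZR tz)) by nra.
    assert (0 <= INR r * IZR tz). { apply Rmult_le_pos. apply pos_INR. apply IZR_le; lia. }
    nra. }
  split. rewrite Hld, Ek, <- abs_IZR, Hk, mult_IZR, INR_IZR_INZ. ring.
  split. rewrite Hlm, Et. auto.
  split. exists u1, u2; auto. split. exists v1, v2; auto. exists tz; auto.
Qed.

Open Scope R_scope.

Lemma L0_props p q r b1 b2 : Sdata p q r -> intvec b1 -> intvec b2 -> norm2 b1 = INR q ->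
  norm2 b2 = INR q -> dot b1 b2 = INR r -> Rabs (det2 b1 b2) = INR p ->
  is_basis (Lspan b1 b2) b1 b2 /\ C_pq p q (Lspan b1 b2) /\ lat_min (Lspan b1 b2) = sqrt (INR q) /\
  lat_det (Lspan b1 b2) = INR p /\ minimal_vec (Lspan b1 b2) b1 /\ minimal_vec (Lspan b1 b2) b2.
Proof.
  intros HS I1 I2 N1 N2 Dt Dd. pose proof HS as [Hpy [Hg [Hq [Hp Hr]]]].
  assert (Hp' : 0 < INR p) by (apply lt_0_INR; auto).
  assert (Hq' : 0 < INR q) by (apply lt_0_INR; auto).
  assert (Hb : is_basis (Lspan b1 b2) b1 b2).
  { split. intro E. rewrite E, Rabs_R0 in Dd. lra. intro v; unfold Lspan; tauto. }
  assert (Hm : is_min_norm (Lspan b1 b2) (sqrt (INR q))).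
  { apply (reduced_min _ b1 b2); auto. rewrite Dt, Rabs_right by (apply Rle_ge, pos_INR).
    replace (2 * INR r) with (INR (2*r)) by (rewrite mult_INR; reflexivity). apply le_INR. auto. }
  assert (Em : lat_min (Lspan b1 b2) = sqrt (INR q)) by (apply lat_min_eq; auto).
  assert (Ed : lat_det (Lspan b1 b2) = INR p) by (rewrite (lat_det_basis _ b1 b2); auto).
  assert (M1 : minimal_vec (Lspan b1 b2) b1).
  { split. eapply basis_in1; eauto. split. destruct Hb; eapply det_nz_l; eauto.
    unfold norm. rewrite N1. auto. }
  assert (M2 : minimal_vec (Lspan b1 b2) b2).
  { split. eapply basis_in2; eauto. split. destruct Hb; eapply det_nz_r; eauto.
    unfold norm. rewrite N2. auto. }
  split; auto. split; [|auto].
  split.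
  - split. split. exists b1, b2; auto. exists b1, b2. split; auto. split; auto. destruct Hb; auto.
    intros v [m [n ->]]. destruct I1 as [a1 [a2 ->]]. destruct I2 as [c1 [c2 ->]].
    exists (m*a1 + n*c1)%Z, (m*a2 + n*c2)%Z. unfold vadd, vscale; simpl.
    rewrite !plus_IZR, !mult_IZR. reflexivity.
  - unfold sin_theta. rewrite Em, Ed. simpl. rewrite Rmult_1_r, sqrt_sqrt; lra.
Qed.

Definition Umat (b1 b2 u v : vec) (s : R) : mat2 :=
  let D := det2 b1 b2 in
  Mat2 ((fst u * snd b2 - fst v * snd b1)/(D*s)) ((fst v * fst b1 - fst u * fst b2)/(D*s))
       ((snd u * snd b2 - snd v * snd b1)/(D*s)) ((snd v * fst b1 - snd u * fst b2)/(D*s)).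

Lemma Umat_orth b1 b2 u v t : det2 b1 b2 <> 0 -> 0 < t ->
  norm2 u = t * norm2 b1 -> norm2 v = t * norm2 b2 -> dot u v = t * dot b1 b2 ->
  orthogonal (Umat b1 b2 u v (sqrt t)).
Proof.
  intros D Ht Nu Nv Duv.
  assert (Hs : sqrt t * sqrt t = t) by (apply sqrt_sqrt; lra).
  assert (Hs0 : sqrt t <> 0) by (apply Rgt_not_eq, sqrt_lt_R0; auto).
  destruct b1 as [b1x b1y], b2 as [b2x b2y], u as [u1 u2], v as [v1 v2].
  unfold orthogonal, Umat, norm2, dot, det2 in *; cbn [fst snd m11 m12 m21 m22] in *.
  set (s := sqrt t) in *. set (DD := b1x * b2y - b1y * b2x) in *.
  split; [|split].
  - replace (((u1 * b2y - v1 * b1y) / (DD * s)) ^ 2 + ((u2 * b2y - v2 * b1y) / (DD * s)) ^ 2)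
      with (((u1 ^ 2 + u2 ^ 2) * b2y^2 + (v1 ^ 2 + v2 ^ 2) * b1y^2 - 2 * (u1 * v1 + u2 * v2) * b1y * b2y) / (DD*DD*(s*s)))
      by (field; auto).
    rewrite Nu, Nv, Duv, Hs. unfold DD. field. split; [lra|auto].
  - replace (((v1 * b1x - u1 * b2x) / (DD * s)) ^ 2 + ((v2 * b1x - u2 * b2x) / (DD * s)) ^ 2)
      with (((u1 ^ 2 + u2 ^ 2) * b2x^2 + (v1 ^ 2 + v2 ^ 2) * b1x^2 - 2 * (u1 * v1 + u2 * v2) * b1x * b2x) / (DD*DD*(s*s)))
      by (field; auto).
    rewrite Nu, Nv, Duv, Hs. unfold DD. field. split; [lra|auto].
  - replace ((u1 * b2y - v1 * b1y) / (DD * s) * ((v1 * b1x - u1 * b2x) / (DD * s)) +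
             (u2 * b2y - v2 * b1y) / (DD * s) * ((v2 * b1x - u2 * b2x) / (DD * s)))
      with (((u1 * v1 + u2 * v2) * (b2y * b1x + b1y * b2x) - (u1^2+u2^2) * b2y * b2x - (v1^2+v2^2) * b1y * b1x) / (DD*DD*(s*s)))
      by (field; auto).
    rewrite Nu, Nv, Duv, Hs. unfold DD. field. split; [lra|auto].
Qed.

Lemma Umat_app b1 b2 u v s x y : det2 b1 b2 <> 0 -> s <> 0 ->
  mapply (Umat b1 b2 u v s) (vadd (vscale x b1) (vscale y b2)) =
  vscale (/s) (vadd (vscale x u) (vscale y v)).
Proof.
  intros D Hs. destruct b1 as [b1x b1y], b2 as [b2x b2y], u as [u1 u2], v as [v1 v2].
  unfold mapply, Umat, vadd, vscale, det2 in *; simpl in *.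
  apply vec_eq; simpl; field; auto.
Qed.

Open Scope R_scope.

Lemma Q2R_frac z zd : zd <> 0%Z -> Q2R (inject_Z z / inject_Z zd) = IZR z / IZR zd.
Proof.
  intro H. rewrite Q2R_div.
  - unfold Q2R, inject_Z; simpl. field. apply not_0_IZR; auto.
  - unfold Qeq, inject_Z; simpl. lia.
Qed.

Lemma rat_entry (z zd : Z) (x : R) : zd <> 0%Z -> x = IZR z / IZR zd -> exists a : Q, x = Q2R a.
Proof. intros H ->. exists (inject_Z z / inject_Z zd)%Q. rewrite Q2R_frac; auto. Qed.

Lemma part4 p q r b1 b2 L : Sdata p q r -> intvec b1 -> intvec b2 -> norm2 b1 = INR q ->
  norm2 b2 = INR q -> dot b1 b2 = INR r -> Rabs (det2 b1 b2) = INR p -> C_pq p q L ->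
  (exists U, orthogonal U /\ (lat_det L = INR p -> rational_mat U) /\
     forall v, L v <-> exists w, Lspan b1 b2 w /\ v = vscale (sqrt (lat_det L / INR p)) (mapply U w)) /\
  (exists c1 c2, minimal_basis L c1 c2 /\
     forall x y : R, norm2 (vadd (vscale x c1) (vscale y c2)) = lat_det L / INR p * Qpq p q x y).
Proof.
  intros HS I1 I2 N1 N2 Dt Dd HL.
  destruct (gen_struct p q r L HS HL) as [u [v [t [Ht [Hb [Mu [Mv [Nu [Nv [Duv [Hdet [Hmin [Iu [Iv [tz Etz]]]]]]]]]]]]]]].
  pose proof HS as [Hpy [Hg [Hq [Hp Hr]]]].
  assert (Hp' : 0 < INR p) by (apply lt_0_INR; auto).
  assert (Et : lat_det L / INR p = t) by (rewrite Hdet; field; lra).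
  assert (D : det2 b1 b2 <> 0) by (intro E; rewrite E, Rabs_R0 in Dd; lra).
  assert (Hs0 : sqrt t <> 0) by (apply Rgt_not_eq, sqrt_lt_R0; lra).
  split.
  - exists (Umat b1 b2 u v (sqrt t)). split; [|split].
    + apply Umat_orth; auto. lra. rewrite Nu, N1; ring. rewrite Nv, N2; ring. rewrite Duv, Dt; ring.
    + intro Hd1. assert (Ht1 : t = 1) by (rewrite Hdet in Hd1; nra). rewrite Ht1.
      rewrite sqrt_1. destruct I1 as [a1 [a2 E1]]. destruct I2 as [c1 [c2 E2]].
      destruct Iu as [u1 [u2 E3]]. destruct Iv as [v1 [v2 E4]]. subst b1 b2 u v.
      assert (Dz : (a1*c2 - a2*c1)%Z <> 0%Z).
      { intro E. apply D. unfold det2; simpl. rewrite <- !mult_IZR, <- minus_IZR, E. auto. }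
      assert (ED : det2 (IZR a1, IZR a2) (IZR c1, IZR c2) * 1 = IZR (a1*c2 - a2*c1)).
      { unfold det2; simpl. rewrite minus_IZR, !mult_IZR. ring. }
      unfold Umat. cbn zeta. rewrite ED. cbn [m11 m12 m21 m22 fst snd].
      destruct (rat_entry (u1*c2 - v1*a2)%Z _ ((IZR u1 * IZR c2 - IZR v1 * IZR a2) / IZR (a1 * c2 - a2 * c1)) Dz) as [x0 X0].
      { unfold Rdiv; f_equal. rewrite minus_IZR, !mult_IZR; reflexivity. }
      destruct (rat_entry (v1*a1 - u1*c1)%Z _ ((IZR v1 * IZR a1 - IZR u1 * IZR c1) / IZR (a1 * c2 - a2 * c1)) Dz) as [x1 X1].
      { unfold Rdiv; f_equal. rewrite minus_IZR, !mult_IZR; reflexivity. }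
      destruct (rat_entry (u2*c2 - v2*a2)%Z _ ((IZR u2 * IZR c2 - IZR v2 * IZR a2) / IZR (a1 * c2 - a2 * c1)) Dz) as [x2 X2].
      { unfold Rdiv; f_equal. rewrite minus_IZR, !mult_IZR; reflexivity. }
      destruct (rat_entry (v2*a1 - u2*c1)%Z _ ((IZR v2 * IZR a1 - IZR u2 * IZR c1) / IZR (a1 * c2 - a2 * c1)) Dz) as [x3 X3].
      { unfold Rdiv; f_equal. rewrite minus_IZR, !mult_IZR; reflexivity. }
      exists x0, x1, x2, x3. auto.
    + intro w. rewrite Et. split.
      * intro Lw. pose proof Hb as [_ HB]. apply HB in Lw as [m [n ->]].
        exists (vadd (vscale (IZR m) b1) (vscale (IZR n) b2)). split. exists m, n; auto.
        rewrite Umat_app; auto. apply vec_eq; unfold vscale, vadd; simpl; field; auto.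
      * intros [w' [[m [n ->]] ->]]. rewrite Umat_app; auto. pose proof Hb as [_ HB]. apply HB.
        exists m, n. apply vec_eq; unfold vscale, vadd; simpl; field; auto.
  - exists u, v. split. split; auto. intros x y. rewrite norm2_comb, Nu, Nv, Duv, Et.
    unfold Qpq. rewrite (sqrt_qp p q r HS). ring.
Qed.

Open Scope R_scope.

Definition ab (z : R*R) : R := Rabs (fst z) + Rabs (snd z).
Definition rsum {T} (f : T -> R) (l : list T) : R := fold_right (fun x acc => f x + acc) 0 l.

Lemma ab_nonneg z : 0 <= ab z.
Proof. unfold ab. pose proof (Rabs_pos (fst z)); pose proof (Rabs_pos (snd z)); lra. Qed.

Lemma Cnorm_le_ab z : Cnorm z <= ab z.
Proof.
  unfold Cnorm, ab. rewrite <- (sqrt_pow2 (Rabs (fst z) + Rabs (snd z))) by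
    (pose proof (Rabs_pos (fst z)); pose proof (Rabs_pos (snd z)); lra).
  apply sqrt_le_1_alt.
  pose proof (Rabs_pos (fst z)); pose proof (Rabs_pos (snd z)).
  rewrite <- (pow2_abs (fst z)), <- (pow2_abs (snd z)). nra.
Qed.

Lemma ab_add z w : ab (Cadd z w) <= ab z + ab w.
Proof. unfold ab, Cadd; simpl. pose proof (Rabs_triang (fst z) (fst w)); pose proof (Rabs_triang (snd z) (snd w)). lra. Qed.

Lemma ab_sub z w : ab (Csub z w) = ab (Csub w z).
Proof. unfold ab, Csub; simpl. rewrite (Rabs_minus_sym (fst z)), (Rabs_minus_sym (snd z)). auto. Qed.

Lemma rsum_nonneg {T} (f : T -> R) l : (forall x, 0 <= f x) -> 0 <= rsum f l.
Proof. intro H. induction l; simpl; auto. lra. pose proof (H a); lra. Qed.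

Lemma rsum_app {T} (f : T -> R) l1 l2 : rsum f (l1 ++ l2) = rsum f l1 + rsum f l2.
Proof. induction l1; simpl; auto. lra. rewrite IHl1; ring. Qed.

Lemma rsum_le {T} (f g : T -> R) l : (forall x, In x l -> f x <= g x) -> rsum f l <= rsum g l.
Proof.
  induction l; simpl; intros; auto. lra.
  pose proof (H a (or_introl eq_refl)). assert (rsum f l <= rsum g l) by (apply IHl; auto). lra.
Qed.

Lemma rsum_scal {T} (f : T -> R) c l : rsum (fun x => c * f x) l = c * rsum f l.
Proof. induction l; simpl; auto. ring. rewrite IHl; ring. Qed.

Lemma rsum_map {T U} (f : U -> R) (h : T -> U) l : rsum f (map h l) = rsum (fun x => f (h x)) l.
Proof. induction l; simpl; auto. rewrite IHl; auto. Qed.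

Lemma rsum_perm {T} (f : T -> R) l1 l2 : Permutation l1 l2 -> rsum f l1 = rsum f l2.
Proof. induction 1; simpl; auto; lra. Qed.

Lemma rsum_filter {T} (f : T -> R) (P : T -> bool) l :
  rsum f l = rsum f (filter P l) + rsum f (filter (fun x => negb (P x)) l).
Proof. induction l; simpl. lra. destruct (P a); simpl; rewrite IHl; ring. Qed.

Lemma rsum_incl {T} (eqd : forall x y : T, {x = y} + {x <> y}) (f : T -> R) F G :
  (forall x, 0 <= f x) -> NoDup F -> (forall x, In x F -> In x G) -> rsum f F <= rsum f G.
Proof.
  intros Hf HF. revert G. induction HF as [|a F HaF HF IH]; intros G HG; simpl.
  - apply rsum_nonneg; auto.
  - assert (Ha : In a G) by (apply HG; left; auto).
    assert (K : f a + rsum f (remove eqd a G) <= rsum f G).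
    { clear -Ha Hf. induction G as [|b G IHG]; simpl in *. contradiction.
      destruct (eqd a b) as [->|Hne].
      - assert (rsum f (remove eqd b G) <= rsum f G).
        { clear -Hf. induction G; simpl. lra. destruct (eqd b a); simpl; pose proof (Hf a); lra. }
        lra.
      - destruct Ha as [Ha|Ha]; [congruence|]. simpl. specialize (IHG Ha). lra. }
    assert (rsum f F <= rsum f (remove eqd a G)).
    { apply IH. intros x Hx. apply in_in_remove. intro E; subst; contradiction. apply HG; right; auto. }
    lra.
Qed.

Lemma Csum_app {T} (g : T -> R*R) l1 l2 : Csum g (l1 ++ l2) = Cadd (Csum g l1) (Csum g l2).
Proof.
  induction l1; simpl. unfold Cadd; destruct (Csum g l2); simpl; f_equal; ring.
  rewrite IHl1. unfold Cadd; simpl; f_equal; ring.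
Qed.

Lemma Csum_perm {T} (g : T -> R*R) l1 l2 : Permutation l1 l2 -> Csum g l1 = Csum g l2.
Proof.
  induction 1; simpl; auto. rewrite IHPermutation; auto.
  unfold Cadd; simpl; f_equal; ring. congruence.
Qed.

Lemma Csum_map {T U} (g : U -> R*R) (h : T -> U) l : Csum g (map h l) = Csum (fun x => g (h x)) l.
Proof. induction l; simpl; auto. rewrite IHl; auto. Qed.

Lemma Csum_ext {T} (g g' : T -> R*R) l : (forall x, In x l -> g x = g' x) -> Csum g l = Csum g' l.
Proof. induction l; simpl; intros; auto. rewrite H by auto. rewrite IHl; auto. Qed.

Lemma Csum_scal {T} (g : T -> R*R) c l : Csum (fun x => Cmul c (g x)) l = Cmul c (Csum g l).
Proof. induction l; simpl. unfold Cmul; simpl; f_equal; ring. rewrite IHl. unfold Cmul, Cadd; simpl; f_equal; ring. Qed.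

Lemma ab_Csum {T} (g : T -> R*R) l : ab (Csum g l) <= rsum (fun x => ab (g x)) l.
Proof.
  induction l; simpl. unfold ab; simpl. rewrite Rabs_R0; lra.
  pose proof (ab_add (g a) (Csum g l)). lra.
Qed.

Lemma Cnorm_mul z w : Cnorm (Cmul z w) = Cnorm z * Cnorm w.
Proof.
  unfold Cnorm, Cmul; simpl. rewrite <- sqrt_mult by nra. f_equal. ring.
Qed.

Lemma Cnorm_nonneg z : 0 <= Cnorm z.
Proof. apply sqrt_pos. Qed.

Lemma perm_split {T} (eqd : forall x y : T, {x = y} + {x <> y}) (F G : list T) :
  NoDup F -> NoDup G -> (forall x, In x G -> In x F) ->
  Permutation F (G ++ filter (fun x => if in_dec eqd x G then false else true) F).
Proof.
  intros HF HG HGF. apply NoDup_Permutation; auto.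
  - apply NoDup_app; auto. apply NoDup_filter; auto.
    intros a Ha Hb. apply filter_In in Hb as [_ Hb]. destruct (in_dec eqd a G); congruence.
  - intro x. rewrite in_app_iff, filter_In. split.
    + intro Hx. destruct (in_dec eqd x G); auto.
    + intros [Hx|[Hx _]]; auto.
Qed.

Lemma lim_bound (u : nat -> R) l N a b : Un_cv u l -> (forall n, (N <= n)%nat -> Rabs (u n - a) <= b) ->
  Rabs (l - a) <= b.
Proof.
  intros Hu Hb. apply Rnot_lt_le. intro H.
  destruct (Hu (Rabs (l - a) - b)) as [M HM]. lra.
  specialize (HM (max M N) ltac:(lia)). specialize (Hb (max M N) ltac:(lia)).
  unfold Rdist in HM.
  pose proof (Rabs_triang (l - u (max M N)) (u (max M N) - a)).
  replace (l - u (max M N) + (u (max M N) - a)) with (l - a) in H0 by ring.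
  rewrite Rabs_minus_sym in HM. lra.
Qed.

Open Scope R_scope.

Lemma Csum_split {T} (eqd : forall x y : T, {x = y} + {x <> y}) (A : T -> Prop) (g : T -> R*R)
  (F G : list T) : NoDup F -> NoDup G -> (forall x, In x G -> In x F) -> (forall x, In x F -> A x) ->
  exists Rl, NoDup Rl /\ (forall x, In x Rl -> A x) /\ (forall x, In x Rl -> ~ In x G) /\
    Csum g F = Cadd (Csum g G) (Csum g Rl).
Proof.
  intros HF HG HGF HA. exists (filter (fun x => if in_dec eqd x G then false else true) F).
  split. apply NoDup_filter; auto. split.
  intros x Hx. apply filter_In in Hx as [Hx _]. auto. split.
  intros x Hx. apply filter_In in Hx as [_ Hx]. destruct (in_dec eqd x G); congruence.
  rewrite <- Csum_app. apply Csum_perm. apply perm_split; auto.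
Qed.

Lemma usum_tail {T} (eqd : forall x y : T, {x = y} + {x <> y}) (A : T -> Prop) (g : T -> R*R)
  (B : nat -> list T) (Tb : nat -> R) :
  (forall n, NoDup (B n)) -> (forall n x, In x (B n) -> A x) ->
  (forall n m, (n <= m)%nat -> forall x, In x (B n) -> In x (B m)) ->
  (forall n F, NoDup F -> (forall x, In x F -> A x) -> (forall x, In x F -> ~ In x (B n)) ->
     rsum (fun x => ab (g x)) F <= Tb n) ->
  (forall eps, 0 < eps -> exists n, Tb n < eps) -> exists S, has_usum A g S.
Proof.
  intros HND HA Hmono Htail Hlim.
  set (u := fun n => fst (Csum g (B n))). set (v := fun n => snd (Csum g (B n))).
  assert (Hc : forall N n, (N <= n)%nat -> Rabs (u n - u N) <= Tb N /\ Rabs (v n - v N) <= Tb N).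
  { intros N n HNn.
    assert (Hi : forall x, In x (B N) -> In x (B n)) by (apply Hmono; auto).
    assert (HAn : forall x, In x (B n) -> A x) by (intros; eapply HA; eauto).
    destruct (Csum_split eqd A g (B n) (B N)) as [Rl [HR1 [HR2 [HR3 HR4]]]]; auto.
    pose proof (Htail N Rl HR1 HR2 HR3) as K. pose proof (ab_Csum g Rl) as K2.
    unfold u, v. rewrite HR4. unfold Cadd, ab in *; simpl in *.
    replace (fst (Csum g (B N)) + fst (Csum g Rl) - fst (Csum g (B N))) with (fst (Csum g Rl)) by ring.
    replace (snd (Csum g (B N)) + snd (Csum g Rl) - snd (Csum g (B N))) with (snd (Csum g Rl)) by ring.
    pose proof (Rabs_pos (fst (Csum g Rl))). pose proof (Rabs_pos (snd (Csum g Rl))). lra. }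
  assert (Cu : Cauchy_crit u /\ Cauchy_crit v).
  { split; intros eps Heps; destruct (Hlim (eps/2)) as [N HN]; try lra; exists N;
    intros n m Hn Hm; unfold R_dist;
    destruct (Hc N n Hn) as [A1 B1]; destruct (Hc N m Hm) as [A2 B2].
    - pose proof (Rabs_triang (u n - u N) (u N - u m)). rewrite (Rabs_minus_sym (u N)) in H.
      replace (u n - u N + (u N - u m)) with (u n - u m) in H by ring. lra.
    - pose proof (Rabs_triang (v n - v N) (v N - v m)). rewrite (Rabs_minus_sym (v N)) in H.
      replace (v n - v N + (v N - v m)) with (v n - v m) in H by ring. lra. }
  destruct Cu as [Cu Cv].
  destruct (R_complete u Cu) as [lu Hlu]. destruct (R_complete v Cv) as [lv Hlv].
  exists (lu, lv). intros eps Heps.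
  destruct (Hlim (eps/3)) as [N HN]. lra.
  assert (E1 : Rabs (lu - u N) <= Tb N) by (apply (lim_bound u lu N); auto; intros; apply Hc; auto).
  assert (E2 : Rabs (lv - v N) <= Tb N) by (apply (lim_bound v lv N); auto; intros; apply Hc; auto).
  exists (B N). split. intros; eapply HA; eauto.
  intros F HF HFA HF0.
  destruct (Csum_split eqd A g F (B N)) as [Rl [HR1 [HR2 [HR3 HR4]]]]; auto.
  pose proof (Htail N Rl HR1 HR2 HR3) as K. pose proof (ab_Csum g Rl) as K2.
  eapply Rle_lt_trans. apply Cnorm_le_ab. rewrite HR4.
  unfold ab, Cadd, Csub in *; simpl in *. fold (u N) (v N).
  pose proof (Rabs_triang (fst (Csum g Rl)) (u N - lu)).
  pose proof (Rabs_triang (snd (Csum g Rl)) (v N - lv)).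
  replace (u N + fst (Csum g Rl) - lu) with (fst (Csum g Rl) + (u N - lu)) by ring.
  replace (v N + snd (Csum g Rl) - lv) with (snd (Csum g Rl) + (v N - lv)) by ring.
  rewrite (Rabs_minus_sym (u N)) in H. rewrite (Rabs_minus_sym (v N)) in H0. lra.
Qed.

Lemma lift_list {T U} (phi : T -> U) (A : T -> Prop) (F' : list U) :
  (forall y, In y F' -> exists x, A x /\ phi x = y) -> exists F, map phi F = F' /\ forall x, In x F -> A x.
Proof.
  induction F' as [|y F' IH]; intros H.
  - exists nil. split; auto. intros x [].
  - destruct (H y (or_introl eq_refl)) as [x [Ax Ex]].
    destruct IH as [F [E1 E2]]. intros; apply H; right; auto.
    exists (x :: F). split. simpl; congruence. intros z [<-|Hz]; auto.
Qed.

Lemma usum_transfer {T U} (A : T -> Prop) (A' : U -> Prop) (phi : T -> U) g g' S :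
  (forall x y, A x -> A y -> phi x = phi y -> x = y) -> (forall x, A x -> A' (phi x)) ->
  (forall y, A' y -> exists x, A x /\ phi x = y) -> (forall x, A x -> g' (phi x) = g x) ->
  has_usum A g S -> has_usum A' g' S.
Proof.
  intros Hinj HA Hsur Hg Hs eps Heps. destruct (Hs eps Heps) as [F0 [HF0 HF0']].
  exists (map phi F0). split.
  { intros y Hy. apply in_map_iff in Hy as [x [<- Hx]]. auto. }
  intros F' HND HF' Hincl.
  destruct (lift_list phi A F') as [F [EF HFA]]. { intros y Hy; apply Hsur; auto. }
  subst F'. rewrite Csum_map. rewrite (Csum_ext _ g) by (intros; apply Hg; auto).
  apply HF0'; auto. eapply NoDup_map_inv; eauto.
  intros x Hx. assert (In (phi x) (map phi F)) by (apply Hincl, in_map; auto).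
  apply in_map_iff in H as [y [Ey Hy]]. rewrite (Hinj x y); auto.
Qed.

Lemma usum_scale {T} (A : T -> Prop) g S c : has_usum A g S -> has_usum A (fun x => Cmul c (g x)) (Cmul c S).
Proof.
  intros Hs eps Heps. destruct (Hs (eps / (Cnorm c + 1))) as [F0 [HF0 HF0']].
  { apply Rdiv_lt_0_compat; auto. pose proof (Cnorm_nonneg c); lra. }
  exists F0. split; auto. intros F HND HFA HF. rewrite Csum_scal.
  replace (Csub (Cmul c (Csum g F)) (Cmul c S)) with (Cmul c (Csub (Csum g F) S))
    by (unfold Cmul, Csub; simpl; f_equal; ring).
  rewrite Cnorm_mul. specialize (HF0' F HND HFA HF).
  pose proof (Cnorm_nonneg c). pose proof (Cnorm_nonneg (Csub (Csum g F) S)).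
  assert (Cnorm (Csub (Csum g F) S) * (Cnorm c + 1) < eps).
  { apply (Rmult_lt_compat_r (Cnorm c + 1)) in HF0'; [|lra].
    replace (eps / (Cnorm c + 1) * (Cnorm c + 1)) with eps in HF0' by (field; lra). lra. }
  nra.
Qed.

Lemma Cnorm_sub_tri a b c : Cnorm (Csub a c) <= Cnorm (Csub a b) + Cnorm (Csub b c).
Proof.
  unfold Cnorm, Csub; cbn [fst snd].
  set (x1 := fst a - fst b). set (y1 := snd a - snd b). set (x2 := fst b - fst c). set (y2 := snd b - snd c).
  replace (fst a - fst c) with (x1 + x2) by (unfold x1, x2; ring).
  replace (snd a - snd c) with (y1 + y2) by (unfold y1, y2; ring).
  pose proof (sqrt_pos (x1^2+y1^2)). pose proof (sqrt_pos (x2^2+y2^2)).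
  rewrite <- (sqrt_pow2 (sqrt (x1 ^ 2 + y1 ^ 2) + sqrt (x2 ^ 2 + y2 ^ 2))) by lra.
  apply sqrt_le_1_alt.
  assert (E1 : sqrt (x1^2+y1^2) * sqrt (x1^2+y1^2) = x1^2+y1^2) by (apply sqrt_sqrt; nra).
  assert (E2 : sqrt (x2^2+y2^2) * sqrt (x2^2+y2^2) = x2^2+y2^2) by (apply sqrt_sqrt; nra).
  assert (CS : x1*x2 + y1*y2 <= sqrt (x1^2+y1^2) * sqrt (x2^2+y2^2)).
  { destruct (Rle_lt_dec (x1*x2+y1*y2) 0). apply Rle_trans with 0; auto. apply Rmult_le_pos; auto.
    apply Rsqr_incr_0_var. unfold Rsqr. 
    replace (sqrt (x1 ^ 2 + y1 ^ 2) * sqrt (x2 ^ 2 + y2 ^ 2) * (sqrt (x1 ^ 2 + y1 ^ 2) * sqrt (x2 ^ 2 + y2 ^ 2)))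
      with ((sqrt (x1^2+y1^2) * sqrt (x1^2+y1^2)) * (sqrt (x2^2+y2^2) * sqrt (x2^2+y2^2))) by ring.
    rewrite E1, E2. pose proof (pow2_ge_0 (x1*y2 - x2*y1)). nra. apply Rmult_le_pos; auto. }
  nra.
Qed.

Lemma Cnorm_sym a b : Cnorm (Csub a b) = Cnorm (Csub b a).
Proof. unfold Cnorm, Csub; simpl. f_equal. ring. Qed.

Lemma Cnorm_zero z : (forall eps, 0 < eps -> Cnorm z < eps) -> z = (0, 0).
Proof.
  intro H. destruct z as [a b]. unfold Cnorm in H; cbn [fst snd] in H.
  assert (a^2 + b^2 = 0).
  { apply NNPP; intro Hne. assert (0 < a^2+b^2) by (pose proof (pow2_ge_0 a); pose proof (pow2_ge_0 b); lra).
    specialize (H (sqrt (a^2+b^2)) (sqrt_lt_R0 _ H0)). lra. }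
  assert (a = 0) by nra. assert (b = 0) by nra. subst; auto.
Qed.

Lemma usum_unique {T} (eqd : forall x y : T, {x = y} + {x <> y}) A (g : T -> R*R) S1 S2 :
  has_usum A g S1 -> has_usum A g S2 -> S1 = S2.
Proof.
  intros H1 H2.
  assert (Csub S1 S2 = (0,0)).
  { apply Cnorm_zero. intros eps Heps.
    destruct (H1 (eps/2)) as [F1 [A1 B1]]. lra. destruct (H2 (eps/2)) as [F2 [A2 B2]]. lra.
    set (F := nodup eqd (F1 ++ F2)).
    assert (HF : NoDup F) by apply NoDup_nodup.
    assert (HA : forall x, In x F -> A x).
    { intros x Hx. apply nodup_In in Hx. apply in_app_iff in Hx as [Hx|Hx]; auto. }
    specialize (B1 F HF HA). specialize (B2 F HF HA).
    assert (K1 : Cnorm (Csub (Csum g F) S1) < eps/2). { apply B1. intros. apply nodup_In, in_app_iff; auto. }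
    assert (K2 : Cnorm (Csub (Csum g F) S2) < eps/2). { apply B2. intros. apply nodup_In, in_app_iff; auto. }
    pose proof (Cnorm_sub_tri S1 (Csum g F) S2). rewrite (Cnorm_sym S1 (Csum g F)) in H. lra. }
  destruct S1, S2. unfold Csub in H; simpl in H. injection H; intros. f_equal; lra.
Qed.

Lemma Csum_fst_nonneg {T} (g : T -> R*R) l : (forall x, In x l -> 0 <= fst (g x)) -> 0 <= fst (Csum g l).
Proof.
  induction l; simpl; intros. lra. unfold Cadd; simpl.
  pose proof (H a (or_introl eq_refl)). assert (0 <= fst (Csum g l)) by (apply IHl; intros; apply H; right; auto). lra.
Qed.

Lemma usum_fst_nonneg {T} (eqd : forall x y : T, {x = y} + {x <> y}) A (g : T -> R*R) S :
  has_usum A g S -> (forall x, A x -> 0 <= fst (g x)) -> 0 <= fst S.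
Proof.
  intros H Hg. apply Rnot_lt_le. intro Hneg.
  destruct (H (- fst S)) as [F0 [HA HB]]. lra.
  specialize (HB (nodup eqd F0) (NoDup_nodup _ _)).
  assert (K : Cnorm (Csub (Csum g (nodup eqd F0)) S) < - fst S).
  { apply HB. intros x Hx; apply HA; apply nodup_In in Hx; auto. intros; apply nodup_In; auto. }
  assert (P : 0 <= fst (Csum g (nodup eqd F0))).
  { apply Csum_fst_nonneg. intros x Hx; apply Hg; apply HA; apply nodup_In in Hx; auto. }
  assert (Rabs (fst (Csub (Csum g (nodup eqd F0)) S)) <= Cnorm (Csub (Csum g (nodup eqd F0)) S)).
  { generalize (Csub (Csum g (nodup eqd F0)) S). intro z. unfold Cnorm.
    rewrite <- (sqrt_pow2 (Rabs (fst z))) by apply Rabs_pos. apply sqrt_le_1_alt. rewrite pow2_abs.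
    pose proof (pow2_ge_0 (snd z)). lra. }
  change (fst (Csub (Csum g (nodup eqd F0)) S)) with (fst (Csum g (nodup eqd F0)) - fst S) in H0. pose proof (Rle_abs (fst (Csum g (nodup eqd F0)) - fst S)). lra.
Qed.

Open Scope R_scope.

Definition zr (K : nat) : list Z :=
  map (fun i => (- Z.of_nat i)%Z) (seq 1 K) ++ 0%Z :: map Z.of_nat (seq 1 K).
Definition ztl (n K : nat) : list Z :=
  map (fun i => (- Z.of_nat i)%Z) (seq (S n) (K - n)) ++ map Z.of_nat (seq (S n) (K - n)).

Lemma zr_in x K : In x (zr K) <-> (Z.abs x <= Z.of_nat K)%Z.
Proof.
  unfold zr. rewrite in_app_iff. simpl. rewrite !in_map_iff. split.
  - intros [[i [<- Hi]]|[<-|[i [<- Hi]]]]; try apply in_seq in Hi; lia.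
  - intro H. destruct (Z.lt_trichotomy x 0) as [Hx|[Hx|Hx]].
    + left. exists (Z.to_nat (-x)). split. lia. apply in_seq. lia.
    + right; left; auto.
    + right; right. exists (Z.to_nat x). split. lia. apply in_seq. lia.
Qed.

Lemma ztl_in x n K : (Z.of_nat n < Z.abs x <= Z.of_nat K)%Z -> In x (ztl n K).
Proof.
  intro H. unfold ztl. rewrite in_app_iff, !in_map_iff. destruct (Z.lt_trichotomy x 0) as [Hx|[Hx|Hx]].
  + left. exists (Z.to_nat (-x)). split. lia. apply in_seq. lia.
  + lia.
  + right. exists (Z.to_nat x). split. lia. apply in_seq. lia.
Qed.

Definition Zp_eq_dec (x y : Z * Z) : {x = y} + {x <> y}.
Proof. decide equality; apply Z.eq_dec. Defined.

Definition nz (z : Z * Z) : bool := negb (Z.eqb (fst z) 0 && Z.eqb (snd z) 0).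

Lemma nz_spec z : nz z = true <-> z <> (0%Z, 0%Z).
Proof.
  destruct z as [x y]. unfold nz; simpl. split.
  - intros H E. injection E; intros; subst. simpl in H. discriminate.
  - intro H. destruct (Z.eqb_spec x 0); destruct (Z.eqb_spec y 0); subst; simpl; auto.
Qed.

Definition Bx (n : nat) : list (Z * Z) := nodup Zp_eq_dec (filter nz (list_prod (zr n) (zr n))).

Lemma Bx_in z n : In z (Bx n) <-> z <> (0%Z,0%Z) /\ (Z.abs (fst z) <= Z.of_nat n)%Z /\ (Z.abs (snd z) <= Z.of_nat n)%Z.
Proof.
  unfold Bx. rewrite nodup_In, filter_In, nz_spec. destruct z as [x y]. rewrite in_prod_iff, !zr_in. simpl. tauto.
Qed.

Definition om (sg : R) (k : nat) : R := exp (- sg * ln (1 + INR k)).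
Definition phi (sg : R) (k : nat) : R := exp (- (sg - 1) * ln (1 + INR k)).
Definition wz (sg : R) (x : Z) : R := om sg (Z.abs_nat x).

Lemma ln_le_sub1 y : 0 < y -> ln y <= y - 1.
Proof. intro Hy. pose proof (exp_ineq1_le (ln y)). rewrite exp_ln in H; auto. lra. Qed.

Lemma key_ineq (j d : R) : 2 <= j -> 0 < d ->
  exp (-(1+d) * ln j) <= (1/d) * (exp (- d * ln (j - 1)) - exp (- d * ln j)).
Proof.
  intros Hj Hd. set (a := ln j). set (b := ln (j - 1)).
  assert (Hab : 1 / j <= a - b).
  { assert (E : ln ((j - 1) * / j) = b - a).
    { rewrite ln_mult, ln_Rinv; try lra. unfold a, b; ring. apply Rinv_0_lt_compat; lra. }
    pose proof (ln_le_sub1 ((j-1) * / j)). rewrite E in H.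
    assert ((j - 1) * / j - 1 = - (1/j)) by (field; lra). rewrite H0 in H. enough (b - a <= - (1/j)) by lra. apply H.
    apply Rmult_lt_0_compat. lra. apply Rinv_0_lt_compat; lra. }
  assert (E1 : exp (- d * b) = exp (- d * a) * exp (d * (a - b))) by (rewrite <- exp_plus; f_equal; ring).
  assert (E2 : exp (-(1+d) * a) = exp (- d * a) * / j).
  { replace (-(1+d)*a) with (- d * a + - a) by ring. rewrite exp_plus, exp_Ropp. unfold a. rewrite exp_ln by lra. auto. }
  pose proof (exp_ineq1_le (d * (a - b))).
  assert (Hp : 0 < exp (- d * a)) by apply exp_pos.
  rewrite E1, E2.
  assert (d * (1/j) <= d * (a - b)) by (apply Rmult_le_compat_l; lra).
  assert (K : exp (- d * a) * (d * / j) <= exp (- d * a) * (exp (d * (a - b)) - 1)).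
  { apply Rmult_le_compat_l. lra. unfold Rdiv in *. lra. }
  replace (exp (- d * a) * / j) with ((1/d) * (exp (- d * a) * (d * / j))) by (field; lra).
  replace (exp (- d * a) * exp (d * (a - b)) - exp (- d * a)) with (exp (- d * a) * (exp (d * (a - b)) - 1)) by ring.
  apply Rmult_le_compat_l. unfold Rdiv; rewrite Rmult_1_l; apply Rlt_le, Rinv_0_lt_compat; auto. auto.
Qed.

Lemma om_step (sg : R) (Hsg : 1 < sg) n : om sg (S n) <= (1 / (sg - 1)) * (phi sg n - phi sg (S n)).
Proof.
  unfold om, phi. rewrite S_INR.
  pose proof (key_ineq (1 + (INR n + 1)) (sg - 1)) as K.
  replace (1 + (INR n + 1) - 1) with (1 + INR n) in K by ring.
  replace (-(1 + (sg - 1))) with (- sg) in K by ring.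
  apply K. pose proof (pos_INR n). lra. lra.
Qed.

Lemma om_tele (sg : R) (Hsg : 1 < sg) n m : rsum (om sg) (seq (S n) m) <= (1 / (sg - 1)) * (phi sg n - phi sg (n + m)).
Proof.
  revert n. induction m; intro n.
  - simpl. rewrite Nat.add_0_r. lra.
  - simpl (seq (S n) (S m)). simpl rsum. pose proof (IHm (S n)). pose proof (om_step sg Hsg n).
    replace (S n + m)%nat with (n + S m)%nat in H by lia. lra.
Qed.

Lemma phi_pos (sg : R) n : 0 < phi sg n.
Proof. apply exp_pos. Qed.
Lemma phi_0 (sg : R) : phi sg 0 = 1.
Proof. unfold phi. simpl. replace (1 + 0) with 1 by ring. rewrite ln_1, Rmult_0_r, exp_0. auto. Qed.
Lemma om_pos (sg : R) n : 0 < om sg n.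
Proof. apply exp_pos. Qed.
Lemma om_0 (sg : R) : om sg 0 = 1.
Proof. unfold om. simpl. replace (1 + 0) with 1 by ring. rewrite ln_1, Rmult_0_r, exp_0. auto. Qed.

Lemma wz_nonneg (sg : R) x : 0 <= wz sg x.
Proof. apply Rlt_le, om_pos. Qed.

Lemma rsum_ext {T} (f g : T -> R) l : (forall x, In x l -> f x = g x) -> rsum f l = rsum g l.
Proof. induction l; simpl; intros; auto. rewrite H by auto. rewrite IHl; auto. Qed.

Lemma rsum_om (sg : R) (Hsg : 1 < sg) K : rsum (om sg) (seq 1 K) <= 1 / (sg - 1).
Proof.
  pose proof (om_tele sg Hsg 0 K). rewrite phi_0 in H. pose proof (phi_pos sg (0 + K)).
  assert (0 < 1 / (sg - 1)) by (apply Rdiv_lt_0_compat; lra).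
  assert (1 / (sg - 1) * (1 - phi sg (0 + K)) <= 1 / (sg - 1) * 1) by (apply Rmult_le_compat_l; lra). lra.
Qed.

Lemma rsum_zr (sg : R) (Hsg : 1 < sg) K : rsum (wz sg) (zr K) <= 1 + 2 / (sg - 1).
Proof.
  unfold zr. rewrite rsum_app. simpl. rewrite !rsum_map.
  unfold wz. rewrite Zabs2Nat.inj_0, om_0.
  rewrite (rsum_ext (fun x => om sg (Z.abs_nat (- Z.of_nat x))) (om sg)) by (intros; f_equal; lia).
  rewrite (rsum_ext (fun x => om sg (Z.abs_nat (Z.of_nat x))) (om sg)) by (intros; f_equal; lia).
  pose proof (rsum_om sg Hsg K). unfold Rdiv in *. lra.
Qed.

Lemma rsum_ztl (sg : R) (Hsg : 1 < sg) n K : rsum (wz sg) (ztl n K) <= 2 / (sg - 1) * phi sg n.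
Proof.
  unfold ztl. rewrite rsum_app, !rsum_map. unfold wz.
  rewrite (rsum_ext (fun x => om sg (Z.abs_nat (- Z.of_nat x))) (om sg)) by (intros; f_equal; lia).
  rewrite (rsum_ext (fun x => om sg (Z.abs_nat (Z.of_nat x))) (om sg)) by (intros; f_equal; lia).
  pose proof (om_tele sg Hsg n (K - n)). pose proof (phi_pos sg (n + (K - n))).
  assert (0 < 1 / (sg - 1)) by (apply Rdiv_lt_0_compat; lra).
  assert (1 / (sg - 1) * (phi sg n - phi sg (n + (K - n))) <= 1 / (sg - 1) * phi sg n) by (apply Rmult_le_compat_l; lra).
  unfold Rdiv in *. lra.
Qed.

Lemma rsum_prod (sg : R) (l1 l2 : list Z) : rsum (fun z => wz sg (fst z) * wz sg (snd z)) (list_prod l1 l2) = rsum (wz sg) l1 * rsum (wz sg) l2.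
Proof.
  induction l1; simpl. ring. rewrite rsum_app, IHl1, rsum_map. simpl. rewrite rsum_scal. ring.
Qed.

Lemma phi_lim (sg : R) (Hsg : 1 < sg) eps : 0 < eps -> exists n, phi sg n < eps.
Proof.
  intro He. destruct (archimed (exp (- ln eps / (sg - 1)))) as [H1 _].
  exists (Z.to_nat (up (exp (- ln eps / (sg - 1))))).
  unfold phi. set (N := Z.to_nat _).
  assert (HN : exp (- ln eps / (sg - 1)) < 1 + INR N).
  { unfold N. rewrite INR_IZR_INZ, Z2Nat.id. lra. apply le_IZR. pose proof (exp_pos (- ln eps / (sg - 1))). lra. }
  rewrite <- (exp_ln eps) by auto. apply exp_increasing.
  apply ln_increasing in HN; [|apply exp_pos]. rewrite ln_exp in HN.
  assert (- ln eps < (sg - 1) * ln (1 + INR N)).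
  { apply (Rmult_lt_compat_l (sg - 1)) in HN; [|lra]. replace ((sg - 1) * (- ln eps / (sg - 1))) with (- ln eps) in HN by (field; lra). lra. }
  lra.
Qed.

Open Scope R_scope.

Lemma Cpow_ab a w : ab (Cpow_pos a w) <= 2 * exp (fst w * ln a).
Proof.
  unfold ab, Cpow_pos; simpl. rewrite !Rabs_mult. rewrite (Rabs_right (exp _)) by (apply Rle_ge, Rlt_le, exp_pos).
  pose proof (exp_pos (fst w * ln a)). pose proof (COS_bound (snd w * ln a)). pose proof (SIN_bound (snd w * ln a)).
  assert (Rabs (cos (snd w * ln a)) <= 1) by (apply Rabs_le; lra).
  assert (Rabs (sin (snd w * ln a)) <= 1) by (apply Rabs_le; lra). nra.
Qed.

Lemma ln_le_mono a b : 0 < a -> a <= b -> ln a <= ln b.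
Proof. intros Ha Hab. destruct (Req_dec a b) as [->|Hne]. lra. apply Rlt_le, ln_increasing; lra. Qed.

Lemma int_fact (x y : Z) : (x, y) <> (0%Z, 0%Z) -> ((1 + Z.abs x) * (1 + Z.abs y) <= 4 * (x*x + y*y))%Z.
Proof.
  intro H. assert (x <> 0 \/ y <> 0)%Z by (destruct (Z.eq_dec x 0); destruct (Z.eq_dec y 0); subst; auto).
  destruct (Z.abs_spec x) as [[? E1]|[? E1]]; destruct (Z.abs_spec y) as [[? E2]|[? E2]]; rewrite E1, E2; nia.
Qed.

Lemma IZR_abs_INR x : IZR (Z.abs x) = INR (Z.abs_nat x).
Proof. rewrite INR_IZR_INZ, Zabs2Nat.id_abs. auto. Qed.

Lemma term_bound (s : R*R) (Qf : R) (x y : Z) : 1 < fst s -> (x, y) <> (0%Z, 0%Z) ->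
  IZR x ^ 2 + IZR y ^ 2 <= Qf ->
  ab (Cpow_pos Qf (Copp s)) <= 2 * exp (fst s * ln 4) * (wz (fst s) x * wz (fst s) y).
Proof.
  intros Hs Hxy HQ. eapply Rle_trans. apply Cpow_ab.
  unfold Copp; simpl fst. set (sg := fst s).
  set (X := 1 + INR (Z.abs_nat x)). set (Y := 1 + INR (Z.abs_nat y)).
  assert (HX : 1 <= X) by (unfold X; pose proof (pos_INR (Z.abs_nat x)); lra).
  assert (HY : 1 <= Y) by (unfold Y; pose proof (pos_INR (Z.abs_nat y)); lra).
  assert (HP : X * Y / 4 <= Qf).
  { apply int_fact in Hxy. apply IZR_le in Hxy. rewrite mult_IZR, !plus_IZR, !mult_IZR, !IZR_abs_INR in Hxy.
    fold X Y in Hxy. assert (IZR (x*x+y*y) = IZR x ^2 + IZR y^2) by (rewrite plus_IZR, !mult_IZR; ring). lra. }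
  assert (HP0 : 0 < X * Y / 4) by nra.
  assert (Hln : ln (X * Y / 4) <= ln Qf) by (apply ln_le_mono; auto).
  assert (E : ln (X * Y / 4) = ln X + ln Y - ln 4).
  { unfold Rdiv. rewrite ln_mult, ln_mult, ln_Rinv; try lra. }
  assert (K : exp (- sg * ln Qf) <= exp (- sg * ln (X * Y / 4))).
  { destruct (Req_dec (ln (X * Y / 4)) (ln Qf)) as [E'|E']. rewrite E'; lra.
    apply Rlt_le, exp_increasing. unfold sg in *. nra. }
  assert (E2 : exp (- sg * ln (X * Y / 4)) = exp (sg * ln 4) * (wz sg x * wz sg y)).
  { unfold wz, om. fold X Y. rewrite E, <- !exp_plus. f_equal. ring. }
  rewrite E2 in K. lra.
Qed.

Lemma list_bound (F : list (Z * Z)) : exists K : nat, forall z, In z F ->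
  (Z.abs (fst z) <= Z.of_nat K)%Z /\ (Z.abs (snd z) <= Z.of_nat K)%Z.
Proof.
  induction F as [|[x y] F [K HK]].
  - exists 0%nat. intros z [].
  - exists (max K (Z.to_nat (Z.max (Z.abs x) (Z.abs y)))). intros z [<-|Hz]; simpl.
    + lia.
    + destruct (HK z Hz). lia.
Qed.

Lemma sum_conv (Qf : Z -> Z -> R) (s : R*R) : 1 < fst s ->
  (forall x y, (x, y) <> (0%Z, 0%Z) -> IZR x ^ 2 + IZR y ^ 2 <= Qf x y) ->
  exists S, has_usum (fun z : Z * Z => z <> (0%Z, 0%Z)) (fun z => Cpow_pos (Qf (fst z) (snd z)) (Copp s)) S.
Proof.
  intros Hs HQ. set (sg := fst s). set (Kc := 2 * exp (sg * ln 4)).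
  assert (HKc : 0 < Kc) by (unfold Kc; pose proof (exp_pos (sg * ln 4)); lra).
  set (W := fun z : Z * Z => wz sg (fst z) * wz sg (snd z)).
  assert (HW : forall z, 0 <= W z) by (intro; unfold W; apply Rmult_le_pos; apply wz_nonneg).
  set (C0 := 2 / (sg - 1)). assert (HC0 : 0 < C0) by (unfold C0; apply Rdiv_lt_0_compat; unfold sg; lra).
  apply (usum_tail Zp_eq_dec _ _ Bx (fun n => Kc * (2 * (C0 * phi sg n * (1 + C0))))).
  - intro; apply NoDup_nodup.
  - intros n x Hx. apply Bx_in in Hx. tauto.
  - intros n m Hnm x Hx. apply Bx_in in Hx. apply Bx_in. destruct Hx as [? [? ?]]. split; [auto|lia].
  - intros n F HND HA Hdis.
    assert (Hout : forall z, In z F -> (Z.of_nat n < Z.abs (fst z) \/ Z.of_nat n < Z.abs (snd z))%Z).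
    { intros z Hz. apply NNPP. intro Hc. apply (Hdis z Hz). apply Bx_in. split. auto. lia. }
    destruct (list_bound F) as [K HK].
    eapply Rle_trans. apply (rsum_le _ (fun z => Kc * W z)).
    { intros [x y] Hz. apply term_bound; auto. }
    rewrite rsum_scal. apply Rmult_le_compat_l; [lra|].
    rewrite (rsum_filter W (fun z => Z.ltb (Z.of_nat n) (Z.abs (fst z)))).
    assert (B1 : rsum W (filter (fun z => Z.ltb (Z.of_nat n) (Z.abs (fst z))) F) <= C0 * phi sg n * (1 + C0)).
    { eapply Rle_trans. apply (rsum_incl Zp_eq_dec W _ (list_prod (ztl n K) (zr K))); auto.
      apply NoDup_filter; auto.
      intros [x y] Hz. apply filter_In in Hz as [Hz Hlt]. apply Z.ltb_lt in Hlt. apply in_prod_iff.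
      destruct (HK _ Hz). simpl in *. split. apply ztl_in; lia. apply zr_in; lia.
      unfold W. rewrite rsum_prod. apply Rmult_le_compat.
      apply rsum_nonneg, wz_nonneg. apply rsum_nonneg, wz_nonneg.
      apply rsum_ztl; unfold sg; lra. apply rsum_zr; unfold sg; lra. }
    assert (B2 : rsum W (filter (fun z => negb (Z.ltb (Z.of_nat n) (Z.abs (fst z)))) F) <= C0 * phi sg n * (1 + C0)).
    { eapply Rle_trans. apply (rsum_incl Zp_eq_dec W _ (list_prod (zr K) (ztl n K))); auto.
      apply NoDup_filter; auto.
      intros [x y] Hz. apply filter_In in Hz as [Hz Hlt]. apply negb_true_iff, Z.ltb_ge in Hlt. apply in_prod_iff.
      destruct (HK _ Hz). pose proof (Hout _ Hz). simpl in *. split. apply zr_in; lia. apply ztl_in; lia.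
      unfold W. rewrite rsum_prod. rewrite Rmult_comm. apply Rmult_le_compat.
      apply rsum_nonneg, wz_nonneg. apply rsum_nonneg, wz_nonneg.
      apply rsum_ztl; unfold sg; lra. apply rsum_zr; unfold sg; lra. }
    lra.
  - intros eps He.
    set (M := Kc * (2 * (C0 * (1 + C0)))).
    assert (HM : 0 < M) by (unfold M; apply Rmult_lt_0_compat; auto; nra).
    destruct (phi_lim sg Hs (eps / M)) as [n Hn]. apply Rdiv_lt_0_compat; auto.
    exists n. replace (Kc * (2 * (C0 * phi sg n * (1 + C0)))) with (M * phi sg n) by (unfold M; ring).
    apply (Rmult_lt_compat_l M) in Hn; auto. replace (M * (eps / M)) with eps in Hn by (field; lra). lra.
Qed.

Open Scope R_scope.

Lemma Cpow_pos_mult a b w : 0 < a -> 0 < b -> Cpow_pos (a * b) w = Cmul (Cpow_pos a w) (Cpow_pos b w).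
Proof.
  intros Ha Hb. unfold Cpow_pos, Cmul; simpl. rewrite ln_mult by auto.
  rewrite !Rmult_plus_distr_l, exp_plus, cos_plus, sin_plus. f_equal; ring.
Qed.

Lemma Cpow_inv a s : 0 < a -> Cpow_pos (/ a) s = Cpow_pos a (Copp s).
Proof. intro Ha. unfold Cpow_pos, Copp; simpl. rewrite ln_Rinv by auto. f_equal; f_equal; f_equal; ring. Qed.

Lemma Cpow_real a x : Cpow_pos a (x, 0) = (exp (x * ln a), 0).
Proof. unfold Cpow_pos; simpl. rewrite Rmult_0_l, cos_0, sin_0. f_equal; ring. Qed.

Lemma Cpow_real_opp a x : Cpow_pos a (Copp (x, 0)) = (exp (- x * ln a), 0).
Proof. unfold Cpow_pos, Copp; simpl. replace (-0 * ln a) with 0 by ring. rewrite cos_0, sin_0. f_equal; ring. Qed.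

Lemma Qpq_lower p q r x y : Sdata p q r -> x ^ 2 + y ^ 2 <= Qpq p q x y.
Proof.
  intro HS. unfold Qpq. rewrite (sqrt_qp p q r HS). pose proof HS as [_ [_ [Hq [_ Hr]]]].
  assert (Hqr : INR r + 1 <= INR q).
  { replace (INR r + 1) with (INR (r + 1)) by (rewrite plus_INR; simpl; ring). apply le_INR. lia. }
  pose proof (pos_INR r). pose proof (pow2_ge_0 (x + y)). pose proof (pow2_ge_0 x). pose proof (pow2_ge_0 y).
  assert (INR r * (x+y)^2 >= 0) by nra.
  assert ((INR q - 1 - INR r) * (x^2+y^2) >= 0) by nra.
  nra.
Qed.

Definition phiL (u v : vec) (z : Z * Z) : vec := vadd (vscale (IZR (fst z)) u) (vscale (IZR (snd z)) v).

Lemma phiL_inj u v z1 z2 : det2 u v <> 0 -> phiL u v z1 = phiL u v z2 -> z1 = z2.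
Proof.
  intros D E. destruct z1 as [x1 y1], z2 as [x2 y2]. unfold phiL, vadd, vscale in E; simpl in E.
  injection E; intros E2 E1. unfold det2 in D.
  set (a := IZR x1 - IZR x2) in *. set (b := IZR y1 - IZR y2) in *.
  assert (F1 : a * fst u + b * fst v = 0) by (unfold a, b; lra).
  assert (F2 : a * snd u + b * snd v = 0) by (unfold a, b; lra).
  assert (Ga : a * (fst u * snd v - snd u * fst v) = 0).
  { replace (a * (fst u * snd v - snd u * fst v)) with (snd v * (a * fst u + b * fst v) - fst v * (a * snd u + b * snd v)) by ring.
    rewrite F1, F2. ring. }
  assert (Gb : b * (fst u * snd v - snd u * fst v) = 0).
  { replace (b * (fst u * snd v - snd u * fst v)) with (fst u * (a * snd u + b * snd v) - snd u * (a * fst u + b * fst v)) by ring.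
    rewrite F1, F2. ring. }
  apply Rmult_integral in Ga as [Ga|Ga]; [|contradiction].
  apply Rmult_integral in Gb as [Gb|Gb]; [|contradiction].
  unfold a, b in *. assert (x1 = x2) by (apply eq_IZR; lra). assert (y1 = y2) by (apply eq_IZR; lra). subst; auto.
Qed.

Lemma part5 p q r L s Fq : Sdata p q r -> C_pq p q L -> 1 < fst s -> Q_sum p q s Fq ->
  epstein_sum L s (Cmul (Cpow_pos (INR p / lat_det L) s) Fq).
Proof.
  intros HS HL Hs HQ.
  destruct (gen_struct p q r L HS HL) as [u [v [t [Ht [Hb [Mu [Mv [Nu [Nv [Duv [Hdet _]]]]]]]]]]].
  pose proof HS as [_ [_ [Hq [Hp _]]]]. assert (Hp' : 0 < INR p) by (apply lt_0_INR; auto).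
  assert (D : det2 u v <> 0) by (destruct Hb; auto).
  set (c := Cpow_pos t (Copp s)).
  assert (Ec : Cpow_pos (INR p / lat_det L) s = c).
  { rewrite Hdet. replace (INR p / (INR p * t)) with (/ t) by (field; lra). apply Cpow_inv. lra. }
  rewrite Ec. unfold epstein_sum.
  replace (Cmul (2, 0) (Cmul c Fq)) with (Cmul c (Cmul (2, 0) Fq)) by (unfold Cmul; simpl; f_equal; ring).
  apply (usum_transfer (fun z : Z * Z => z <> (0%Z, 0%Z)) _ (phiL u v)
    (fun z => Cmul c (Cpow_pos (Qpq p q (IZR (fst z)) (IZR (snd z))) (Copp s)))).
  - intros; eapply phiL_inj; eauto.
  - intros z Hz. split.
    + destruct Hb as [_ HB]. apply HB. exists (fst z), (snd z). auto.
    + intro E. apply Hz. apply (phiL_inj u v); auto. rewrite E. unfold phiL, v0, vadd, vscale; simpl.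
      apply vec_eq; simpl; ring.
  - intros w [Lw Hw]. destruct Hb as [_ HB]. apply HB in Lw as [m [n ->]]. exists (m, n). split; auto.
    intro E. injection E; intros; subst. apply Hw. apply vec_eq; unfold vadd, vscale, v0; simpl; ring.
  - intros [x y] Hz. unfold phiL; simpl. rewrite norm2_comb, Nu, Nv, Duv.
    assert (Hpos : 0 < Qpq p q (IZR x) (IZR y)).
    { eapply Rlt_le_trans; [|apply (Qpq_lower p q r); auto].
      assert (x <> 0 \/ y <> 0)%Z by (destruct (Z.eq_dec x 0); destruct (Z.eq_dec y 0); subst; auto).
      destruct H as [H|H]; apply not_0_IZR in H; apply Rsqr_pos_lt in H; unfold Rsqr in H;
        pose proof (pow2_ge_0 (IZR x)); pose proof (pow2_ge_0 (IZR y)); simpl in *; nra. }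
    replace (IZR x * IZR x * (INR q * t) + IZR y * IZR y * (INR q * t) + 2 * IZR x * IZR y * (INR r * t))
      with (t * Qpq p q (IZR x) (IZR y)) by (unfold Qpq; rewrite (sqrt_qp p q r HS); ring).
    rewrite Cpow_pos_mult; auto. lra.
  - apply usum_scale. exact HQ.
Qed.

Open Scope R_scope.

Definition vec_eq_dec (x y : vec) : {x = y} + {x <> y}.
Proof. decide equality; apply Req_EM_T. Defined.

Lemma Q_sum_exists p q r s : Sdata p q r -> 1 < fst s -> exists Fq, Q_sum p q s Fq.
Proof.
  intros HS Hs.
  destruct (sum_conv (fun x y => Qpq p q (IZR x) (IZR y)) s Hs) as [S HS'].
  { intros x y _. apply (Qpq_lower p q r); auto. }
  exists (Cmul (/2, 0) S). unfold Q_sum.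
  replace (Cmul (2, 0) (Cmul (/ 2, 0) S)) with S; auto.
  destruct S; unfold Cmul; simpl; f_equal; field.
Qed.

Lemma cancel2 E1 E2 : Cmul (2, 0) E1 = Cmul (2, 0) E2 -> E1 = E2.
Proof.
  destruct E1 as [a b], E2 as [c d]. unfold Cmul; simpl. intro H. injection H; intros. f_equal; lra.
Qed.

Lemma Qsum_fst_nonneg p q s Fq : Q_sum p q (s, 0) Fq -> 0 <= fst Fq.
Proof.
  intro H. pose proof (usum_fst_nonneg Zp_eq_dec _ _ _ H) as K.
  assert (0 <= fst (Cmul (2, 0) Fq)).
  { apply K. intros z _. rewrite Cpow_real_opp. simpl. apply Rlt_le, exp_pos. }
  unfold Cmul in H0; simpl in H0. lra.
Qed.

Theorem theorem1p3 (p q : nat) (HS : in_S p q) :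
  exists L0 : vec -> Prop,
    thm_props p q L0 /\
    (forall L1 : vec -> Prop, thm_props p q L1 ->
       exists U : mat2, orthogonal U /\ rational_mat U /\
         forall v, L1 v <-> exists w, L0 w /\ v = mapply U w).
Proof.
  destruct (in_S_data p q HS) as [r Sd].
  destruct (L0_vectors p q r Sd) as [b1 [b2 [I1 [I2 [N1 [N2 [Dt Dd]]]]]]].
  destruct (L0_props p q r b1 b2 Sd I1 I2 N1 N2 Dt Dd) as [Hb0 [HC0 [Em [Ed [M1 M2]]]]].
  pose proof Sd as [_ [_ [Hq [Hp _]]]].
  assert (Hp' : 0 < INR p) by (apply lt_0_INR; auto).
  assert (Hq' : 0 < INR q) by (apply lt_0_INR; auto).
  exists (Lspan b1 b2).
  split.
  - split; [auto|]. split; [|split; [|split; [|split; [|split]]]].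
    + split; auto. intros L HL.
      destruct (gen_struct p q r L Sd HL) as [u [v [t [Ht [_ [_ [_ [_ [_ [_ [_ [Hm _]]]]]]]]]]]].
      rewrite Hm. apply sqrt_le_1_alt. nra.
    + split; auto. intros L HL.
      destruct (gen_struct p q r L Sd HL) as [u [v [t [Ht [_ [_ [_ [_ [_ [_ [Hd _]]]]]]]]]]].
      rewrite Hd. nra.
    + exists b1, b2. split. split; auto. intros x y.
      rewrite norm2_comb, N1, N2, Dt. unfold Qpq. rewrite (sqrt_qp p q r Sd). ring.
    + intros L HL. destruct (part4 p q r b1 b2 L Sd I1 I2 N1 N2 Dt Dd HL) as [[U [HU [_ HU2]]] H2].
      split; auto. exists U; auto.
    + intros L HL s Hs. destruct (Q_sum_exists p q r s Sd Hs) as [Fq HF].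
      exists (Cmul (Cpow_pos (INR p / lat_det L) s) Fq), Fq. split; [|split; auto].
      apply (part5 p q r); auto.
    + intros s Hs L HL Ee E0 HE HE0.
      destruct (Q_sum_exists p q r (s, 0) Sd Hs) as [Fq HF].
      pose proof (part5 p q r L (s, 0) Fq Sd HL Hs HF) as K1.
      pose proof (part5 p q r (Lspan b1 b2) (s, 0) Fq Sd HC0 Hs HF) as K2.
      unfold epstein_sum in HE, HE0, K1, K2.
      assert (X1 := usum_unique vec_eq_dec _ _ _ _ HE K1). apply cancel2 in X1.
      assert (X2 := usum_unique vec_eq_dec _ _ _ _ HE0 K2). apply cancel2 in X2.
      subst Ee E0. rewrite Ed. replace (INR p / INR p) with 1 by (field; lra).
      rewrite !Cpow_real, ln_1, Rmult_0_r, exp_0. unfold Cmul; simpl.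
      pose proof (Qsum_fst_nonneg p q s Fq HF).
      destruct (gen_struct p q r L Sd HL) as [u [v [t [Ht [_ [_ [_ [_ [_ [_ [Hd _]]]]]]]]]]].
      rewrite Hd. assert (Hl : ln (INR p / (INR p * t)) <= 0).
      { replace (INR p / (INR p * t)) with (/ t) by (field; lra). rewrite ln_Rinv by lra.
        assert (0 <= ln t). { rewrite <- ln_1. apply ln_le_mono; lra. } lra. }
      assert (exp (s * ln (INR p / (INR p * t))) <= 1).
      { rewrite <- exp_0. destruct (Req_dec (s * ln (INR p / (INR p * t))) 0) as [E|E].
        rewrite E; lra. apply Rlt_le, exp_increasing. assert (0 < s) by lra. nra. }
      nra.
  - intros L1 [HC1 [_ [[Hd1 _] _]]].
    destruct (part4 p q r b1 b2 L1 Sd I1 I2 N1 N2 Dt Dd HC1) as [[U [HU [HR HU2]]] _].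
    exists U. split; auto. split; auto. intro v. rewrite HU2, Hd1.
    replace (INR p / INR p) with 1 by (field; lra). rewrite sqrt_1.
    split; intros [w [Hw Ew]]; exists w; split; auto; rewrite Ew; unfold vscale; destruct (mapply U w); simpl; f_equal; ring.
Qed.
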